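(* Assume $(K-1)P^2<1$. Then: (i) the functions $h_N(z)=\psi^{s*}_N(z,z_0)+\frac{1}{2\pi}\log|z-z_0|$ are harmonic on $D\cap\mathbb{C}$ and converge uniformly on every compact subset of $D\cap\mathbb{C}$. Consequently $\psi^s(z,z_0):=\lim_{N\to\infty}\psi^{s*}_N(z,z_0)$ exists for every finite $z\in D\setminus\{z_0\}$, is harmonic in $z$ on $(D\cap\mathbb{C})\setminus\{z_0\}$, and $\psi^s(z,z_0)+\frac{1}{2\pi}\log|z-z_0|$ extends to a harmonic function in a neighborhood of $z_0$; (ii) for each $j=1,\ldots,K$, the restrictions of $\psi^{s*}_N(\cdot,z_0)$ to the circle $L_j$ converge, uniformly in $z\in L_j$, to a finite constant $C_j$ (independent of $z\in L_j$).
   Context: Let $K\ge 2$. Let $L_j=\{z:|z-c_j|=R_j\}$, $j=1,\dots,K$, be circles in $\mathbb{C}$ whose closed disks $\{|z-c_j|\le R_j\}$ are pairwise disjoint, and let $D$ be the domain in the extended complex plane exterior to all of these closed disks (so $D$ contains $\infty$). Write $\operatorname{int}L_j$ for the open disk $|z-c_j|<R_j$. Let $T_j(z)=c_j+\frac{R_j^2}{\bar z-\bar c_j}$ be the inversion in $L_j$ (with $T_j(c_j)=\infty$, $T_j(\infty)=c_j$). Fix a finite point $z_0\in D$. For $M\ge 0$, the level-$M$ points are the multiset of points $T_{i_1}\circ T_{i_2}\circ\cdots\circ T_{i_M}(z_0)$ over all index words $(i_1,\ldots,i_M)\in\{1,\ldots,K\}^M$ with $i_k\ne i_{k+1}$ for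 $k=1,\ldots,M-1$ (level 0 is the single point $z_0$); there are $K(K-1)^{M-1}$ level-$M$ points for $M\ge1$, each lying in $\operatorname{int}L_{i_1}$. Define $\psi^s_N(z,z_0)=-\frac{1}{2\pi}\sum_{M=0}^{N}(-1)^M\sum_{\zeta\in\text{level }M}\log|z-\zeta|$ (sum with multiplicity), and $\psi^{s*}_N(z,z_0)=\frac{(K-1)\psi^s_N(z,z_0)+\psi^s_{N+1}(z,z_0)}{K}$. Define $P_j=\max\left\{\frac{R_j}{|z_0-c_j|},\ \frac{R_j}{|c_j-c_l|-R_l}\ (l=1,\ldots,K,\ l\ne j)\right\}$ and $P=\max\{P_1,\ldots,P_K\}$. *)

(* Defs.v *)
(* the complex plane is modelled as R*R. *)
From Stdlib Require Import Reals List Arith.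
Import ListNotations.
Open Scope R_scope.

Definition pt := (R * R)%type.

Definition padd (p q : pt) : pt := (fst p + fst q, snd p + snd q).
Definition psub (p q : pt) : pt := (fst p - fst q, snd p - snd q).
Definition pscale (a : R) (p : pt) : pt := (a * fst p, a * snd p).
Definition nsq (p : pt) : R := fst p * fst p + snd p * snd p.
Definition pdist (p q : pt) : R := sqrt (nsq (psub p q)).

(* Inversion in the circle |z - c| = r:  T(z) = c + r^2/conj(z - c)
   = c + r^2 (z - c)/|z - c|^2. *)
Definition inv_circle (c : pt) (r : R) (z : pt) : pt :=
  padd c (pscale (r * r / nsq (psub z c)) (psub z c)).

(* Index words (i_1,...,i_M) over {0,...,K-1} with i_k <> i_{k+1};
   the head of the list is i_1. *)
Fixpoint words (K M : nat) : list (list nat) :=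
  match M with
  | O => [ [] ]
  | S M' => flat_map (fun w =>
              map (fun i => i :: w)
                (filter (fun i => match w with
                                  | [] => true
                                  | j :: _ => negb (Nat.eqb i j) end)
                        (seq 0 K)))
              (words K M')
  end.

Definition word_point (c : nat -> pt) (r : nat -> R) (z0 : pt) (w : list nat) : pt :=
  fold_right (fun i z => inv_circle (c i) (r i) z) z0 w.

Definition level_sum (K : nat) (c : nat -> pt) (r : nat -> R) (z0 : pt)
  (M : nat) (z : pt) : R :=
  fold_right Rplus 0 (map (fun w => ln (pdist z (word_point c r z0 w))) (words K M)).

Definition psi_s (K : nat) (c : nat -> pt) (r : nat -> R) (z0 : pt)
  (N : nat) (z : pt) : R :=
  - / (2 * PI) * sum_f_R0 (fun M => (-1) ^ M * level_sum K c r z0 M z) N.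

Definition psi_s_star (K : nat) (c : nat -> pt) (r : nat -> R) (z0 : pt)
  (N : nat) (z : pt) : R :=
  ((INR K - 1) * psi_s K c r z0 N z + psi_s K c r z0 (S N) z) / INR K.

Definition P_j (K : nat) (c : nat -> pt) (r : nat -> R) (z0 : pt) (j : nat) : R :=
  fold_right Rmax (r j / pdist z0 (c j))
    (map (fun l => r j / (pdist (c j) (c l) - r l))
       (filter (fun l => negb (Nat.eqb l j)) (seq 0 K))).

Definition P_max (K : nat) (c : nat -> pt) (r : nat -> R) (z0 : pt) : R :=
  fold_right Rmax 0 (map (P_j K c r z0) (seq 0 K)).

(* finite part D ∩ C of the domain exterior to the closed disks *)
Definition Dom (K : nat) (c : nat -> pt) (r : nat -> R) (z : pt) : Prop :=
  forall j, (j < K)%nat -> pdist z (c j) > r j.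

Definition cont_in (U : pt -> Prop) (g : pt -> R) (p : pt) : Prop :=
  forall eps, eps > 0 -> exists d, d > 0 /\
    forall q, U q -> pdist q p < d -> Rabs (g q - g p) < eps.

Definition harmonic_on (U : pt -> Prop) (f : pt -> R) : Prop :=
  exists fx fy fxx fxy fyx fyy : pt -> R,
    forall p, U p ->
      derivable_pt_lim (fun t => f (t, snd p)) (fst p) (fx p) /\
      derivable_pt_lim (fun t => f (fst p, t)) (snd p) (fy p) /\
      derivable_pt_lim (fun t => fx (t, snd p)) (fst p) (fxx p) /\
      derivable_pt_lim (fun t => fx (fst p, t)) (snd p) (fxy p) /\
      derivable_pt_lim (fun t => fy (t, snd p)) (fst p) (fyx p) /\
      derivable_pt_lim (fun t => fy (fst p, t)) (snd p) (fyy p) /\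
      cont_in U fxx p /\ cont_in U fxy p /\ cont_in U fyx p /\ cont_in U fyy p /\
      fxx p + fyy p = 0.

Definition compact2 (S : pt -> Prop) : Prop :=
  (exists B, forall p, S p -> pdist p (0, 0) <= B) /\
  (forall p, (forall eps, eps > 0 -> exists q, S q /\ pdist p q < eps) -> S p).

Definition unif_cv_on (S : pt -> Prop) (h : nat -> pt -> R) : Prop :=
  exists g : pt -> R, forall eps, eps > 0 -> exists N0, forall N z,
    (N >= N0)%nat -> S z -> Rabs (h N z - g z) < eps.

(* Main.v *)
Require Import Defs.
From Stdlib Require Import Reals List Arith Lra Lia Classical ClassicalEpsilon FunctionalExtensionality.
From Coquelicot Require Coquelicot.
Import ListNotations.
Open Scope R_scope.

Definition lsum {A} (l : list A) (f : A -> R) : R := fold_right Rplus 0 (map f l).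

Lemma lsum_nil {A} (f : A -> R) : lsum [] f = 0.
Proof. reflexivity. Qed.
Lemma lsum_cons {A} a l (f : A -> R) : lsum (a :: l) f = f a + lsum l f.
Proof. reflexivity. Qed.
Lemma lsum_app {A} l1 l2 (f : A -> R) : lsum (l1 ++ l2) f = lsum l1 f + lsum l2 f.
Proof. induction l1; simpl; unfold lsum in *; simpl; try rewrite IHl1; lra. Qed.
Lemma lsum_flat_map {A B} (g : A -> list B) l (f : B -> R) :
  lsum (flat_map g l) f = lsum l (fun a => lsum (g a) f).
Proof. induction l; simpl. reflexivity. rewrite lsum_app, lsum_cons, IHl. reflexivity. Qed.
Lemma lsum_map {A B} (g : A -> B) l (f : B -> R) : lsum (map g l) f = lsum l (fun a => f (g a)).
Proof. unfold lsum; rewrite map_map; reflexivity. Qed.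
Lemma lsum_filter {A} (p : A -> bool) l f :
  lsum (filter p l) f = lsum l (fun a => if p a then f a else 0).
Proof. induction l; simpl. reflexivity. rewrite lsum_cons. destruct (p a); rewrite ?lsum_cons, IHl; lra. Qed.
Lemma lsum_ext_in {A} l (f g : A -> R) : (forall a, In a l -> f a = g a) -> lsum l f = lsum l g.
Proof. induction l; intros H; simpl. reflexivity. rewrite !lsum_cons, H, IHl; auto with datatypes. Qed.
Lemma lsum_plus {A} l (f g : A -> R) : lsum l (fun a => f a + g a) = lsum l f + lsum l g.
Proof. induction l; simpl. unfold lsum; simpl; lra. rewrite !lsum_cons, IHl; lra. Qed.
Lemma lsum_scal {A} l (f : A -> R) k : lsum l (fun a => k * f a) = k * lsum l f.
Proof. induction l; simpl. unfold lsum; simpl; lra. rewrite !lsum_cons, IHl; lra. Qed.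
Lemma lsum_opp {A} l (f : A -> R) : lsum l (fun a => - f a) = - lsum l f.
Proof. induction l; simpl. unfold lsum; simpl; lra. rewrite !lsum_cons, IHl; lra. Qed.
Lemma lsum_minus {A} l (f g : A -> R) : lsum l (fun a => f a - g a) = lsum l f - lsum l g.
Proof. induction l; simpl. unfold lsum; simpl; lra. rewrite !lsum_cons, IHl; lra. Qed.
Lemma lsum_const {A} l (k : R) : lsum (A:=A) l (fun _ => k) = INR (length l) * k.
Proof. induction l. unfold lsum; simpl; lra. rewrite !lsum_cons, IHl. change (length (a :: l)) with (S (length l)). rewrite S_INR; lra. Qed.
Lemma lsum_swap {A B} (l1 : list A) (l2 : list B) f :
  lsum l1 (fun a => lsum l2 (fun b => f a b)) = lsum l2 (fun b => lsum l1 (fun a => f a b)).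
Proof.
  induction l1; simpl.
  - unfold lsum at 1; simpl. induction l2; simpl. reflexivity. rewrite lsum_cons, <- IHl2. unfold lsum; simpl; lra.
  - rewrite lsum_cons, IHl1, <- lsum_plus. reflexivity.
Qed.
Lemma lsum_abs {A} l (f : A -> R) : Rabs (lsum l f) <= lsum l (fun a => Rabs (f a)).
Proof. induction l; simpl. unfold lsum; simpl; rewrite Rabs_R0; lra.
  rewrite !lsum_cons. eapply Rle_trans. apply Rabs_triang. lra. Qed.
Lemma lsum_le {A} l (f g : A -> R) : (forall a, In a l -> f a <= g a) -> lsum l f <= lsum l g.
Proof. induction l; intros H; simpl. unfold lsum; simpl; lra.
  rewrite !lsum_cons. assert (f a <= g a) by (apply H; simpl; auto).
  assert (lsum l f <= lsum l g) by (apply IHl; intros; apply H; simpl; auto). lra. Qed.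
Lemma lsum_bound {A} l (f : A -> R) B : (forall a, In a l -> Rabs (f a) <= B) ->
  Rabs (lsum l f) <= INR (length l) * B.
Proof. intros H. eapply Rle_trans. apply lsum_abs. rewrite <- lsum_const. apply lsum_le. auto. Qed.

Lemma lsum_seq_single (K j : nat) (f : nat -> R) : (j < K)%nat ->
  lsum (seq 0 K) (fun i => if Nat.eqb i j then f i else 0) = f j.
Proof.
  intros Hj. assert (Hs: forall s n, (n <= j)%nat -> (j < n + s)%nat ->
    lsum (seq n s) (fun i => if Nat.eqb i j then f i else 0) = f j) .
  { induction s; intros n H2 H3. lia. simpl. rewrite lsum_cons.
    destruct (Nat.eqb_spec n j).
    - subst. rewrite (lsum_ext_in (seq (S j) s) _ (fun _ => 0)). rewrite lsum_const, Rmult_0_r. ring.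
      intros a Ha. apply in_seq in Ha. destruct (Nat.eqb_spec a j); [lia|auto].
    - rewrite IHs. ring. lia. lia. }
  apply Hs; lia.
Qed.

Lemma length_filter_neq (K h : nat) : (h < K)%nat ->
  length (filter (fun i => negb (Nat.eqb i h)) (seq 0 K)) = (K - 1)%nat.
Proof.
  intros H.
  assert (Hs: forall s n, (n <= h)%nat -> (h < n + s)%nat ->
    length (filter (fun i => negb (Nat.eqb i h)) (seq n s)) = (s - 1)%nat).
  { induction s; intros n H1 H2. lia. simpl. destruct (Nat.eqb_spec n h).
    - subst. simpl. clear IHs. assert (forall m, (h < m)%nat -> length (filter (fun i => negb (Nat.eqb i h)) (seq m s)) = s).
      { clear. induction s; intros m Hm; simpl. auto. destruct (Nat.eqb_spec m h). lia. simpl. rewrite IHs; lia. }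
      rewrite H0; lia.
    - simpl. rewrite IHs; lia. }
  rewrite Hs; lia.
Qed.

Definition hne (i : nat) (w : list nat) : bool :=
  match w with [] => true | j :: _ => negb (Nat.eqb i j) end.
Definition lne (k : nat) (u : list nat) : bool :=
  match u with [] => true | _ => negb (Nat.eqb k (last u 0%nat)) end.

Lemma words_S_sum K M (F : list nat -> R) :
  lsum (words K (S M)) F =
  lsum (words K M) (fun w => lsum (seq 0 K) (fun i => if hne i w then F (i :: w) else 0)).
Proof.
  simpl. rewrite lsum_flat_map. apply lsum_ext_in. intros w _.
  rewrite lsum_map, lsum_filter. reflexivity.
Qed.

Lemma if_lsum {A} (b : bool) l (f : A -> R) :
  (if b then lsum l f else 0) = lsum l (fun a => if b then f a else 0).
Proof. destruct b. reflexivity. rewrite lsum_const; ring. Qed.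

Lemma if_if (b1 b2 : bool) (x : R) :
  (if b1 then (if b2 then x else 0) else 0) = if (b1 && b2)%bool then x else 0.
Proof. destruct b1, b2; reflexivity. Qed.

Lemma words_app_sum K M (F : list nat -> R) :
  lsum (words K (S M)) F =
  lsum (words K M) (fun u => lsum (seq 0 K) (fun k => if lne k u then F (u ++ [k]) else 0)).
Proof.
  revert F. induction M; intros F.
  - rewrite words_S_sum. simpl words. rewrite !lsum_cons, !lsum_nil. reflexivity.
  - rewrite words_S_sum. rewrite (IHM (fun w => lsum (seq 0 K) (fun i => if hne i w then F (i :: w) else 0))).
    rewrite words_S_sum. apply lsum_ext_in. intros u _.
    rewrite (lsum_ext_in (seq 0 K) (fun i => if hne i u then lsum (seq 0 K) (fun k => if lne k (i :: u) then F ((i :: u) ++ [k]) else 0) else 0)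
      (fun i => lsum (seq 0 K) (fun k => if (hne i u && lne k (i :: u))%bool then F ((i :: u) ++ [k]) else 0))).
    2:{ intros i _. rewrite if_lsum. apply lsum_ext_in. intros k _. apply if_if. }
    rewrite (lsum_ext_in (seq 0 K) (fun k => if lne k u then lsum (seq 0 K) (fun i => if hne i (u ++ [k]) then F (i :: u ++ [k]) else 0) else 0)
      (fun k => lsum (seq 0 K) (fun i => if (lne k u && hne i (u ++ [k]))%bool then F (i :: u ++ [k]) else 0))).
    2:{ intros k _. rewrite if_lsum. apply lsum_ext_in. intros i _. apply if_if. }
    rewrite lsum_swap. apply lsum_ext_in. intros i _. apply lsum_ext_in. intros k _.
    replace (lne k u && hne i (u ++ [k]))%bool with (hne i u && lne k (i :: u))%bool. reflexivity.
    destruct u as [|a u'].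
    + simpl. rewrite Nat.eqb_sym. reflexivity.
    + simpl. destruct u'; simpl; apply Bool.andb_comm.
Qed.

Fixpoint chain (l : list nat) : Prop :=
  match l with
  | a :: ((b :: _) as t) => a <> b /\ chain t
  | _ => True
  end.

Definition valid K (w : list nat) : Prop := Forall (fun i => (i < K)%nat) w /\ chain w.

Lemma words_valid K M w : In w (words K M) -> valid K w /\ length w = M.
Proof.
  revert w. induction M; intros w Hw.
  - simpl in Hw. destruct Hw as [<-|[]]. split; [split; [constructor|exact I]|reflexivity].
  - simpl in Hw. apply in_flat_map in Hw. destruct Hw as [u [Hu Hw]].
    apply in_map_iff in Hw. destruct Hw as [i [<- Hi]]. apply filter_In in Hi. destruct Hi as [Hi Hne].
    apply in_seq in Hi. destruct (IHM u Hu) as [[HF HC] HL]. split; [split|].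
    + constructor; [lia|auto].
    + destruct u as [|j u']. exact I. split; auto. intros ->. rewrite Nat.eqb_refl in Hne. discriminate.
    + simpl. lia.
Qed.

Lemma valid_cons K i w : valid K (i :: w) -> valid K w.
Proof. intros [HF HC]. inversion HF; subst. split; auto. destruct w; simpl in *; tauto. Qed.

Lemma valid_app_last K u k : valid K (u ++ [k]) -> valid K u /\ (k < K)%nat /\ lne k u = true.
Proof.
  induction u as [|a u IH]; intros [HF HC].
  - simpl in HF. inversion HF. split; [split; [constructor|exact I]|split; auto].
  - simpl in HF. inversion HF; subst.
    assert (Hv : valid K (u ++ [k])). { split; auto. destruct u; simpl in *; tauto. }
    destruct (IH Hv) as [[HF' HC'] [Hk Hl]]. split; [split|split; auto].
    + constructor; auto.
    + destruct u as [|b u']. exact I. simpl in HC. split; tauto.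
    + destruct u as [|b u'].
      * simpl in HC. simpl. destruct HC as [Hak _]. apply Bool.negb_true_iff, Nat.eqb_neq. auto.
      * simpl. simpl in Hl. exact Hl.
Qed.

Lemma last_lt K u : valid K u -> u <> [] -> (last u 0 < K)%nat.
Proof.
  intros [HF _] Hu. induction u as [|a u IH]. congruence.
  inversion HF; subst. destruct u. simpl. auto. simpl. apply IH; auto. congruence.
Qed.

Lemma count_lne K u (X : R) : valid K u -> u <> [] ->
  lsum (seq 0 K) (fun k => if lne k u then X else 0) = (INR K - 1) * X.
Proof.
  intros Hv Hu. destruct u as [|a u']. congruence.
  change (lne ?k (a :: u')) with (negb (Nat.eqb k (last (a :: u') 0%nat))).
  rewrite <- (lsum_filter (fun k => negb (Nat.eqb k (last (a :: u') 0%nat))) (seq 0 K) (fun _ => X)).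
  rewrite lsum_const, length_filter_neq. rewrite minus_INR. simpl. ring.
  assert (H := last_lt K _ Hv Hu). lia. apply (last_lt K _ Hv Hu).
Qed.

Lemma count_hne K w (X : R) : valid K w -> w <> [] ->
  lsum (seq 0 K) (fun i => if hne i w then X else 0) = (INR K - 1) * X.
Proof.
  intros [HF _] Hu. destruct w as [|a u']. congruence. inversion HF; subst.
  change (hne ?k (a :: u')) with (negb (Nat.eqb k a)).
  rewrite <- (lsum_filter (fun k => negb (Nat.eqb k a)) (seq 0 K) (fun _ => X)).
  rewrite lsum_const, length_filter_neq by auto. rewrite minus_INR by lia. simpl. ring.
Qed.

Lemma length_words_S K M : (1 <= K)%nat ->
  INR (length (words K (S M))) = INR K * (INR K - 1) ^ M.
Proof.
  intros HK.
  assert (E: forall l : list (list nat), INR (length l) = lsum l (fun _ => 1)).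
  { intros l. rewrite lsum_const. ring. }
  induction M.
  - rewrite E, words_S_sum. simpl words. rewrite lsum_cons, lsum_nil. simpl hne.
    rewrite lsum_const, length_seq. ring.
  - rewrite E, words_S_sum.
    rewrite (lsum_ext_in _ _ (fun _ => (INR K - 1) * 1)).
    rewrite lsum_const, IHM. simpl. ring.
    intros w Hw. destruct (words_valid _ _ _ Hw) as [Hv Hl]. apply count_hne; auto.
    intros ->. simpl in Hl. discriminate.
Qed.

Lemma word_point_app c r z0 u k :
  word_point c r z0 (u ++ [k]) = word_point c r (inv_circle (c k) (r k) z0) u.
Proof. unfold word_point. rewrite fold_right_app. reflexivity. Qed.

Lemma nsq_ge0 p : 0 <= nsq p.
Proof. unfold nsq. nra. Qed.

Lemma pdist_ge0 a b : 0 <= pdist a b.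
Proof. apply sqrt_pos. Qed.

Lemma pdist_sym a b : pdist a b = pdist b a.
Proof. unfold pdist, nsq, psub; simpl. f_equal. ring. Qed.

Lemma pdist_refl a : pdist a a = 0.
Proof. unfold pdist, nsq, psub; simpl. replace (_ + _) with 0 by ring. apply sqrt_0. Qed.

Lemma pdist_sq a b : pdist a b * pdist a b = nsq (psub a b).
Proof. unfold pdist. apply sqrt_sqrt, nsq_ge0. Qed.

Lemma sqrt_le_sq x y : 0 <= y -> x <= y * y -> sqrt x <= y.
Proof. intros Hy H. rewrite <- (sqrt_square y) by auto. apply sqrt_le_1_alt. auto. Qed.

Lemma pdist_triang a b d : pdist a d <= pdist a b + pdist b d.
Proof.
  set (u := pdist a b). set (v := pdist b d).
  assert (Hu : u * u = nsq (psub a b)) by apply pdist_sq.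
  assert (Hv : v * v = nsq (psub b d)) by apply pdist_sq.
  assert (u0 : 0 <= u) by apply pdist_ge0. assert (v0 : 0 <= v) by apply pdist_ge0.
  unfold pdist at 1. apply sqrt_le_sq. lra.
  unfold nsq, psub in *; simpl in *.
  set (x1 := fst a - fst b) in *. set (y1 := snd a - snd b) in *.
  set (x2 := fst b - fst d) in *. set (y2 := snd b - snd d) in *.
  replace (fst a - fst d) with (x1 + x2) by (unfold x1, x2; ring).
  replace (snd a - snd d) with (y1 + y2) by (unfold y1, y2; ring).
  assert (CS : (x1 * x2 + y1 * y2) <= u * v).
  { assert (Hsq : (x1*x2+y1*y2)*(x1*x2+y1*y2) <= (u*v)*(u*v)).
    { replace ((u*v)*(u*v)) with ((u*u)*(v*v)) by ring. rewrite Hu, Hv. pose proof (Rle_0_sqr (x1*y2 - x2*y1)). unfold Rsqr in *. nra. }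
    assert (0 <= u*v) by nra. destruct (Rle_or_lt (x1 * x2 + y1 * y2) (u*v)); auto. nra. }
  nra.
Qed.

Lemma pdist_pos a b : a <> b -> 0 < pdist a b.
Proof.
  intros H. unfold pdist. apply sqrt_lt_R0. unfold nsq, psub. destruct a as [a1 a2], b as [b1 b2]; simpl.
  destruct (Req_dec a1 b1); destruct (Req_dec a2 b2); subst; try congruence; nra.
Qed.

Lemma pdist_pos_ne a b : 0 < pdist a b -> a <> b.
Proof. intros H ->. rewrite pdist_refl in H. lra. Qed.

Lemma nsq_pos_of a b : 0 < pdist a b -> 0 < nsq (psub a b).
Proof. intros H. rewrite <- pdist_sq. nra. Qed.

Lemma inv_sub c r z : psub (inv_circle c r z) c = pscale (r * r / nsq (psub z c)) (psub z c).
Proof. unfold inv_circle, padd, pscale, psub; simpl. f_equal; ring. Qed.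

Lemma nsq_scale a p : nsq (pscale a p) = a * a * nsq p.
Proof. unfold nsq, pscale; simpl; ring. Qed.

Lemma inv_center c r z : r > 0 -> 0 < pdist z c ->
  pdist (inv_circle c r z) c = r * r / pdist z c.
Proof.
  intros Hr Hz. assert (Hn := pdist_sq z c). set (d := pdist z c) in *.
  unfold pdist at 1. rewrite inv_sub, nsq_scale, <- Hn.
  replace (r * r / (d * d) * (r * r / (d * d)) * (d * d)) with ((r*r/d)*(r*r/d)) by (field; lra).
  apply sqrt_square. apply Rmult_le_pos. nra. apply Rlt_le, Rinv_0_lt_compat. nra.
Qed.

Lemma inv_sq_id p1 p2 q1 q2 s : p1*p1+p2*p2 <> 0 -> q1*q1+q2*q2 <> 0 ->
  (s/(p1*p1+p2*p2)*p1 - s/(q1*q1+q2*q2)*q1) * (s/(p1*p1+p2*p2)*p1 - s/(q1*q1+q2*q2)*q1) +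
  (s/(p1*p1+p2*p2)*p2 - s/(q1*q1+q2*q2)*q2) * (s/(p1*p1+p2*p2)*p2 - s/(q1*q1+q2*q2)*q2) =
  s * s * ((p1-q1)*(p1-q1)+(p2-q2)*(p2-q2)) / ((p1*p1+p2*p2)*(q1*q1+q2*q2)).
Proof. intros H1 H2. field. auto. Qed.

Lemma inv_dist c r a b : r > 0 -> 0 < pdist a c -> 0 < pdist b c ->
  pdist (inv_circle c r a) (inv_circle c r b) = r * r * pdist a b / (pdist a c * pdist b c).
Proof.
  intros Hr Ha Hb.
  assert (Hna := pdist_sq a c). assert (Hnb := pdist_sq b c). assert (Hab := pdist_sq a b).
  assert (E : nsq (psub (inv_circle c r a) (inv_circle c r b)) =
     (r * r) * (r*r) * nsq (psub a b) / (nsq (psub a c) * nsq (psub b c))).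
  { unfold inv_circle, padd, pscale, psub, nsq; simpl.
    replace (fst c + r * r / ((fst a - fst c) * (fst a - fst c) + (snd a - snd c) * (snd a - snd c)) * (fst a - fst c) -
     (fst c + r * r / ((fst b - fst c) * (fst b - fst c) + (snd b - snd c) * (snd b - snd c)) * (fst b - fst c)))
     with (r * r / ((fst a - fst c) * (fst a - fst c) + (snd a - snd c) * (snd a - snd c)) * (fst a - fst c) -
     r * r / ((fst b - fst c) * (fst b - fst c) + (snd b - snd c) * (snd b - snd c)) * (fst b - fst c)) by ring.
    replace (snd c + r * r / ((fst a - fst c) * (fst a - fst c) + (snd a - snd c) * (snd a - snd c)) * (snd a - snd c) -
     (snd c + r * r / ((fst b - fst c) * (fst b - fst c) + (snd b - snd c) * (snd b - snd c)) * (snd b - snd c)))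
     with (r * r / ((fst a - fst c) * (fst a - fst c) + (snd a - snd c) * (snd a - snd c)) * (snd a - snd c) -
     r * r / ((fst b - fst c) * (fst b - fst c) + (snd b - snd c) * (snd b - snd c)) * (snd b - snd c)) by ring.
    rewrite inv_sq_id.
    - f_equal. f_equal. ring.
    - change (nsq (psub a c) <> 0). rewrite <- Hna. nra.
    - change (nsq (psub b c) <> 0). rewrite <- Hnb. nra. }
  unfold pdist at 1. rewrite E, <- Hna, <- Hnb, <- Hab.
  set (da := pdist a c) in *. set (db := pdist b c) in *. set (dab := pdist a b) in *.
  assert (dab0 : 0 <= dab) by apply pdist_ge0.
  replace (r * r * (r * r) * (dab * dab) / (da * da * (db * db))) with
    ((r * r * dab / (da * db)) * (r * r * dab / (da * db))) by (field; lra).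
  apply sqrt_square. apply Rmult_le_pos. nra. apply Rlt_le, Rinv_0_lt_compat. nra.
Qed.

Lemma inv_circle_pt c r z w : r > 0 -> pdist z c = r -> 0 < pdist w c ->
  pdist z (inv_circle c r w) = r * pdist z w / pdist w c.
Proof.
  intros Hr Hz Hw. assert (Hnz := pdist_sq z c). assert (Hnw := pdist_sq w c). assert (Hzw := pdist_sq z w).
  rewrite Hz in Hnz.
  assert (E : nsq (psub z (inv_circle c r w)) = r * r * nsq (psub z w) / nsq (psub w c)).
  { unfold inv_circle, padd, pscale, psub, nsq in *; simpl in *.
    set (p1 := fst w - fst c) in *. set (p2 := snd w - snd c) in *.
    set (a1 := fst z - fst c) in *. set (a2 := snd z - snd c) in *.
    replace (fst z - (fst c + r * r / (p1 * p1 + p2 * p2) * p1)) with (a1 - r * r / (p1 * p1 + p2 * p2) * p1) by (unfold a1; ring).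
    replace (snd z - (snd c + r * r / (p1 * p1 + p2 * p2) * p2)) with (a2 - r * r / (p1 * p1 + p2 * p2) * p2) by (unfold a2; ring).
    replace (fst z - fst w) with (a1 - p1) by (unfold a1, p1; ring).
    replace (snd z - snd w) with (a2 - p2) by (unfold a2, p2; ring).
    assert (Hp : p1 * p1 + p2 * p2 <> 0) by nra.
    rewrite Hnz. field. auto. }
  unfold pdist at 1. rewrite E, <- Hnw, <- Hzw.
  set (dw := pdist w c) in *. set (dzw := pdist z w) in *.
  assert (0 <= dzw) by apply pdist_ge0.
  replace (r * r * (dzw * dzw) / (dw * dw)) with ((r * dzw / dw) * (r * dzw / dw)) by (field; lra).
  apply sqrt_square. apply Rmult_le_pos. nra. apply Rlt_le, Rinv_0_lt_compat. nra.
Qed.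

Lemma geom_small (C q eps : R) : 0 <= q < 1 -> 0 < eps -> exists N, forall n, (N <= n)%nat -> C * q ^ n < eps.
Proof.
  intros Hq He.
  destruct (pow_lt_1_zero q ltac:(rewrite Rabs_right; lra) (eps / (Rabs C + 1))) as [N HN].
  apply Rdiv_lt_0_compat; auto. pose proof (Rabs_pos C); lra.
  exists N. intros n Hn. specialize (HN n Hn). rewrite Rabs_right in HN by (apply Rle_ge, pow_le; lra).
  assert (0 <= q ^ n) by (apply pow_le; lra).
  assert (HC : C <= Rabs C) by apply RRle_abs.
  apply Rmult_lt_compat_r with (r := Rabs C + 1) in HN. 2: pose proof (Rabs_pos C); lra.
  unfold Rdiv in HN. rewrite Rmult_assoc, Rinv_l in HN. 2: pose proof (Rabs_pos C); lra.
  assert (C * q^n <= Rabs C * q^n) by (apply Rmult_le_compat_r; lra).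
  rewrite Rmult_1_r, Rmult_plus_distr_l, Rmult_1_r in HN. rewrite (Rmult_comm (Rabs C)) in H0. eapply Rle_lt_trans. apply H0. clear Hn. lra.
Qed.

Lemma unif_limit {T} (Z : T -> Prop) (s : nat -> T -> R) (C q : R) : 0 <= q < 1 ->
  (forall z m n, Z z -> (n <= m)%nat -> Rabs (s m z - s n z) <= C * q ^ n) ->
  exists g : T -> R, forall z, Z z -> forall n, Rabs (s n z - g z) <= C * q ^ n.
Proof.
  intros Hq H.
  assert (Ex : forall z, exists l, Z z -> forall n, Rabs (s n z - l) <= C * q ^ n).
  { intros z. destruct (classic (Z z)) as [Hz|Hz]. 2: { exists 0. tauto. }
    assert (Hc : Cauchy_crit (fun n => s n z)).
    { intros eps He. destruct (geom_small C q eps Hq He) as [N HN]. exists N.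
      intros n m Hn Hm. unfold R_dist. destruct (le_ge_dec n m).
      - rewrite Rabs_minus_sym. eapply Rle_lt_trans. apply H; auto. apply HN; auto.
      - eapply Rle_lt_trans. apply H; auto. apply HN; auto. }
    destruct (R_complete _ Hc) as [l Hl]. exists l. intros _ n.
    apply Rnot_lt_le. intros Hlt.
    set (e := Rabs (s n z - l) - C * q ^ n).
    destruct (Hl e ltac:(unfold e; lra)) as [N HN].
    specialize (HN (max N n) ltac:(lia)). unfold R_dist in HN.
    assert (H1 := H z (max N n) n Hz ltac:(lia)).
    assert (H2 := Rabs_triang (s n z - s (max N n) z) (s (max N n) z - l)).
    replace (s n z - s (max N n) z + (s (max N n) z - l)) with (s n z - l) in H2 by ring.
    rewrite Rabs_minus_sym in H1. unfold e in HN. lra. }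
  exists (fun z => epsilon (inhabits 0) (fun l => Z z -> forall n, Rabs (s n z - l) <= C * q ^ n)).
  intros z Hz. apply (epsilon_spec (inhabits 0) (fun l => Z z -> forall n, Rabs (s n z - l) <= C * q ^ n)); auto.
Qed.

Definition nrm (w : pt) := sqrt (nsq w).
Definition k0 (w : pt) := ln (nrm w).
Definition k1 (w : pt) := fst w / nsq w.
Definition k2 (w : pt) := snd w / nsq w.
Definition k3 (w : pt) := (snd w * snd w - fst w * fst w) / (nsq w * nsq w).
Definition k4 (w : pt) := -2 * fst w * snd w / (nsq w * nsq w).
Definition k5 (w : pt) := - k3 w.

Definition KLip (k : pt -> R) := forall d, 0 < d -> exists L, 0 <= L /\
  forall w w', d <= nrm w -> d <= nrm w' -> Rabs (k w - k w') <= L * nrm (psub w w').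

Lemma norm_sq w : nrm w * nrm w = nsq w.
Proof. apply sqrt_sqrt, nsq_ge0. Qed.
Lemma norm_ge0 w : 0 <= nrm w.
Proof. apply sqrt_pos. Qed.

Lemma norm_pdist w : nrm w = pdist w (0, 0).
Proof. unfold nrm, pdist, nsq, psub; simpl. f_equal. ring. Qed.

Lemma norm_rev_triang w w' : Rabs (nrm w - nrm w') <= nrm (psub w w').
Proof.
  assert (E : nrm (psub w w') = pdist w w') by reflexivity.
  rewrite E, !norm_pdist. assert (H1 := pdist_triang w w' (0,0)). assert (H2 := pdist_triang w' w (0,0)).
  rewrite (pdist_sym w' w) in H2. apply Rabs_le. lra.
Qed.

Lemma ln_lip a b d : 0 < d -> d <= a -> d <= b -> Rabs (ln a - ln b) <= Rabs (a - b) / d.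
Proof.
  assert (Key : forall a b, 0 < d -> d <= a -> d <= b -> b <= a -> ln a - ln b <= (a - b) / d).
  { intros x y Hd Hx Hy Hxy. replace (ln x - ln y) with (ln (x / y)) by (unfold Rdiv; rewrite ln_mult, ln_Rinv; try apply Rinv_0_lt_compat; lra).
    assert (H := exp_ineq1_le (ln (x / y))). rewrite exp_ln in H. 2: apply Rdiv_lt_0_compat; lra.
    assert (x / y - 1 = (x - y) / y) by (field; lra).
    assert ((x - y) / y <= (x - y) / d). { unfold Rdiv. apply Rmult_le_compat_l. lra. apply Rinv_le_contravar; lra. }
    lra. }
  intros Hd Ha Hb. destruct (Rle_or_lt b a).
  - assert (0 <= ln a - ln b). { assert (ln b <= ln a). destruct (Req_dec a b). subst; lra. left. apply ln_increasing; lra. lra. }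
    rewrite !Rabs_right by lra. apply Key; auto.
  - assert (ln a < ln b) by (apply ln_increasing; lra).
    rewrite Rabs_left by lra. rewrite Rabs_left by lra.
    replace (- (ln a - ln b)) with (ln b - ln a) by ring. replace (- (a - b)) with (b - a) by ring.
    apply Key; auto; lra.
Qed.

Lemma k0_lip : KLip k0.
Proof.
  intros d Hd. exists (/ d). split. left; apply Rinv_0_lt_compat; auto.
  intros w w' Hw Hw'. unfold k0. eapply Rle_trans. apply (ln_lip _ _ d); auto.
  unfold Rdiv. rewrite Rmult_comm. apply Rmult_le_compat_l. left; apply Rinv_0_lt_compat; auto.
  apply norm_rev_triang.
Qed.

Lemma sq2_bound a b X : 0 <= X -> a * a + b * b = X * X -> Rabs a <= X /\ Rabs b <= X.
Proof.
  intros HX H.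
  assert (Ea : Rabs a * Rabs a = a * a) by (rewrite <- Rabs_mult; apply Rabs_right; nra).
  assert (Eb : Rabs b * Rabs b = b * b) by (rewrite <- Rabs_mult; apply Rabs_right; nra).
  assert (0 <= Rabs a) by apply Rabs_pos. assert (0 <= Rabs b) by apply Rabs_pos.
  split; nra.
Qed.

Lemma nsq_pos_norm w d : 0 < d -> d <= nrm w -> 0 < nsq w.
Proof. intros Hd Hw. rewrite <- norm_sq. nra. Qed.

Lemma k12_id w w' : nsq w <> 0 -> nsq w' <> 0 ->
  (k1 w - k1 w') * (k1 w - k1 w') + (k2 w - k2 w') * (k2 w - k2 w') = nsq (psub w w') / (nsq w * nsq w').
Proof.
  destruct w as [u v], w' as [u' v']. unfold k1, k2, nsq, psub; simpl. intros H1 H2. field. auto.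
Qed.

Lemma k12_bound w w' d : 0 < d -> d <= nrm w -> d <= nrm w' ->
  Rabs (k1 w - k1 w') <= / (d * d) * nrm (psub w w') /\ Rabs (k2 w - k2 w') <= / (d * d) * nrm (psub w w').
Proof.
  intros Hd Hw Hw'.
  assert (Hn := nsq_pos_norm w d Hd Hw). assert (Hn' := nsq_pos_norm w' d Hd Hw').
  set (X := nrm (psub w w') / (nrm w * nrm w')).
  assert (HX : 0 <= X). { unfold X. apply Rmult_le_pos. apply norm_ge0. left. apply Rinv_0_lt_compat. nra. }
  assert (E : (k1 w - k1 w') * (k1 w - k1 w') + (k2 w - k2 w') * (k2 w - k2 w') = X * X).
  { rewrite k12_id by lra. unfold X. rewrite <- (norm_sq (psub w w')), <- (norm_sq w), <- (norm_sq w').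
    field. split; nra. }
  destruct (sq2_bound _ _ _ HX E) as [A B].
  assert (X <= / (d * d) * nrm (psub w w')).
  { unfold X. unfold Rdiv. rewrite Rmult_comm. apply Rmult_le_compat_r. apply norm_ge0.
    apply Rinv_le_contravar. nra. apply Rmult_le_compat; lra. }
  split; lra.
Qed.

Lemma k1_lip : KLip k1.
Proof. intros d Hd. exists (/ (d * d)). split. left; apply Rinv_0_lt_compat; nra.
  intros w w' Hw Hw'. apply (k12_bound w w' d); auto. Qed.
Lemma k2_lip : KLip k2.
Proof. intros d Hd. exists (/ (d * d)). split. left; apply Rinv_0_lt_compat; nra.
  intros w w' Hw Hw'. apply (k12_bound w w' d); auto. Qed.

Lemma k34_id w w' : nsq w <> 0 -> nsq w' <> 0 ->
  (k3 w - k3 w') * (k3 w - k3 w') + (k4 w - k4 w') * (k4 w - k4 w') =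
  nsq (psub w w') * nsq (padd w w') / (nsq w * nsq w * (nsq w' * nsq w')).
Proof.
  destruct w as [u v], w' as [u' v']. unfold k3, k4, nsq, psub, padd; simpl. intros H1 H2. field. auto.
Qed.

Lemma norm_padd w w' : nrm (padd w w') <= nrm w + nrm w'.
Proof.
  assert (E : nrm (padd w w') = pdist w (psub (0,0) w')).
  { unfold nrm, pdist, nsq, padd, psub; simpl. f_equal. ring. }
  rewrite E. eapply Rle_trans. apply (pdist_triang w (0,0)). rewrite <- norm_pdist.
  right. f_equal. unfold nrm, pdist, nsq, psub; simpl. f_equal. ring.
Qed.

Lemma cube_le d a b e : 0 < d -> d <= a -> d <= b -> d <= e -> d * d * d <= a * b * e.
Proof. intros. apply Rmult_le_compat. nra. lra. apply Rmult_le_compat; lra. lra. Qed.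

Lemma k34_bound w w' d : 0 < d -> d <= nrm w -> d <= nrm w' ->
  Rabs (k3 w - k3 w') <= 2 / (d * d * d) * nrm (psub w w') /\
  Rabs (k4 w - k4 w') <= 2 / (d * d * d) * nrm (psub w w').
Proof.
  intros Hd Hw Hw'.
  assert (Hn := nsq_pos_norm w d Hd Hw). assert (Hn' := nsq_pos_norm w' d Hd Hw').
  set (nw := nrm w) in *. set (nw' := nrm w') in *. assert (Hw0 : 0 < nw) by lra. assert (Hw0' : 0 < nw') by lra.
  set (X := nrm (psub w w') * nrm (padd w w') / (nw * nw * (nw' * nw'))).
  assert (Hp := norm_ge0 (psub w w')). assert (Ha := norm_ge0 (padd w w')).
  assert (HX : 0 <= X). { unfold X. apply Rmult_le_pos. nra. left. apply Rinv_0_lt_compat. repeat apply Rmult_lt_0_compat; lra. }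
  assert (E : (k3 w - k3 w') * (k3 w - k3 w') + (k4 w - k4 w') * (k4 w - k4 w') = X * X).
  { rewrite k34_id by lra. unfold X, nw, nw'. rewrite <- (norm_sq (psub w w')), <- (norm_sq (padd w w')), <- (norm_sq w), <- (norm_sq w').
    field. unfold nw, nw' in *; split; lra. }
  destruct (sq2_bound _ _ _ HX E) as [A B].
  assert (X <= 2 / (d * d * d) * nrm (psub w w')).
  { unfold X. assert (Hpa := norm_padd w w'). fold nw nw' in Hpa.
    assert (H1 : nrm (padd w w') / (nw * nw * (nw' * nw')) <= 2 / (d * d * d)).
    { apply Rle_trans with ((nw + nw') / (nw * nw * (nw' * nw'))).
      unfold Rdiv. apply Rmult_le_compat_r. left. apply Rinv_0_lt_compat. repeat apply Rmult_lt_0_compat; lra. auto.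
      replace ((nw + nw') / (nw * nw * (nw' * nw'))) with (/ (nw * nw' * nw') + / (nw * nw * nw')) by (field; split; lra).
      replace (2 / (d * d * d)) with (/ (d * d * d) + / (d * d * d)) by (field; lra).
      apply Rplus_le_compat; apply Rinv_le_contravar; try (repeat apply Rmult_lt_0_compat; lra);
      apply cube_le; lra. }
    replace (nrm (psub w w') * nrm (padd w w') / (nw * nw * (nw' * nw'))) with
      (nrm (padd w w') / (nw * nw * (nw' * nw')) * nrm (psub w w')) by (field; split; lra).
    apply Rmult_le_compat_r; auto. }
  split; lra.
Qed.

Lemma k3_lip : KLip k3.
Proof. intros d Hd. exists (2 / (d * d * d)). split. left; apply Rdiv_lt_0_compat; [lra|]. repeat apply Rmult_lt_0_compat; auto.
  intros w w' Hw Hw'. apply (k34_bound w w' d); auto. Qed.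
Lemma k4_lip : KLip k4.
Proof. intros d Hd. exists (2 / (d * d * d)). split. left; apply Rdiv_lt_0_compat; [lra|]. repeat apply Rmult_lt_0_compat; auto.
  intros w w' Hw Hw'. apply (k34_bound w w' d); auto. Qed.
Lemma k5_lip : KLip k5.
Proof. intros d Hd. destruct (k3_lip d Hd) as [L [HL H]]. exists L. split; auto.
  intros w w' Hw Hw'. unfold k5. replace (- k3 w - - k3 w') with (- (k3 w - k3 w')) by ring.
  rewrite Rabs_Ropp. auto. Qed.

Module KD.
Import Coquelicot.Coquelicot.

Lemma Dk0x p z : 0 < nsq (psub p z) ->
  derivable_pt_lim (fun t => k0 (psub (t, snd p) z)) (fst p) (k1 (psub p z)).
Proof.
  destruct p as [x y], z as [a b]. unfold k0, k1, nrm, nsq, psub; simpl. intros H.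
  apply is_derive_Reals. auto_derive.
  - split. replace (x + - a) with (x - a) by ring. auto. split; auto. apply sqrt_lt_R0. replace (x + - a) with (x - a) by ring. auto.
  - replace (x + - a) with (x - a) by ring. set (s := sqrt ((x - a) * (x - a) + (y - b) * (y - b))).
    assert (Hs : s * s = (x - a) * (x - a) + (y - b) * (y - b)) by (apply sqrt_sqrt; lra).
    assert (0 < s) by (apply sqrt_lt_R0; auto). rewrite <- Hs. field. lra.
Qed.

Lemma Dk0y p z : 0 < nsq (psub p z) ->
  derivable_pt_lim (fun t => k0 (psub (fst p, t) z)) (snd p) (k2 (psub p z)).
Proof.
  destruct p as [x y], z as [a b]. unfold k0, k2, nrm, nsq, psub; simpl. intros H.
  apply is_derive_Reals. auto_derive.
  - split. replace (y + - b) with (y - b) by ring. auto. split; auto. apply sqrt_lt_R0. replace (y + - b) with (y - b) by ring. auto.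
  - replace (y + - b) with (y - b) by ring. set (s := sqrt ((x - a) * (x - a) + (y - b) * (y - b))).
    assert (Hs : s * s = (x - a) * (x - a) + (y - b) * (y - b)) by (apply sqrt_sqrt; lra).
    assert (0 < s) by (apply sqrt_lt_R0; auto). rewrite <- Hs. field. lra.
Qed.

Ltac kder := apply is_derive_Reals; auto_derive;
  [ try (replace (fst _ + - _) with (fst _ - _) by ring); try (replace (_ + - _) with (_ - _) by ring); repeat split; lra
  | try (replace (_ + - _) with (_ - _) by ring); try (replace (_ + - _) with (_ - _) by ring); field; lra ].

Lemma Dk1x p z : 0 < nsq (psub p z) ->
  derivable_pt_lim (fun t => k1 (psub (t, snd p) z)) (fst p) (k3 (psub p z)).
Proof. destruct p as [x y], z as [a b]. unfold k1, k3, nsq, psub; simpl. intros H. kder. Qed.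
Lemma Dk1y p z : 0 < nsq (psub p z) ->
  derivable_pt_lim (fun t => k1 (psub (fst p, t) z)) (snd p) (k4 (psub p z)).
Proof. destruct p as [x y], z as [a b]. unfold k1, k4, nsq, psub; simpl. intros H. kder. Qed.
Lemma Dk2x p z : 0 < nsq (psub p z) ->
  derivable_pt_lim (fun t => k2 (psub (t, snd p) z)) (fst p) (k4 (psub p z)).
Proof. destruct p as [x y], z as [a b]. unfold k2, k4, nsq, psub; simpl. intros H. kder. Qed.
Lemma Dk2y p z : 0 < nsq (psub p z) ->
  derivable_pt_lim (fun t => k2 (psub (fst p, t) z)) (snd p) (k5 (psub p z)).
Proof. destruct p as [x y], z as [a b]. unfold k2, k5, k3, nsq, psub; simpl. intros H. kder. Qed.

End KD.
Import KD.

Lemma D_lsum {A} (l : list A) (f : A -> R -> R) f' x :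
  (forall a, In a l -> derivable_pt_lim (f a) x (f' a)) ->
  derivable_pt_lim (fun t => lsum l (fun a => f a t)) x (lsum l f').
Proof.
  induction l as [|a l IH]; intros H.
  - unfold lsum; simpl. apply derivable_pt_lim_const.
  - rewrite lsum_cons. change (fun t => lsum (a :: l) (fun a0 => f a0 t)) with
      (plus_fct (f a) (fun t => lsum l (fun a0 => f a0 t))).
    apply derivable_pt_lim_plus. apply H; simpl; auto. apply IH. intros; apply H; simpl; auto.
Qed.

Lemma D_sum_f (g : nat -> R -> R) g' N x :
  (forall M, (M <= N)%nat -> derivable_pt_lim (g M) x (g' M)) ->
  derivable_pt_lim (fun t => sum_f_R0 (fun M => g M t) N) x (sum_f_R0 g' N).
Proof.
  induction N; intros H.
  - simpl. apply H; auto.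
  - simpl. change (fun t => sum_f_R0 (fun M => g M t) N + g (S N) t) with
      (plus_fct (fun t => sum_f_R0 (fun M => g M t) N) (g (S N))).
    apply derivable_pt_lim_plus. apply IHN. intros; apply H; lia. apply H; lia.
Qed.

Lemma D_scal (f : R -> R) a l x : derivable_pt_lim f x l -> derivable_pt_lim (fun t => a * f t) x (a * l).
Proof. intros H. apply (derivable_pt_lim_scal f a x l H). Qed.

Lemma D_plus (f g : R -> R) lf lg x : derivable_pt_lim f x lf -> derivable_pt_lim g x lg ->
  derivable_pt_lim (fun t => f t + g t) x (lf + lg).
Proof. intros H1 H2. apply (derivable_pt_lim_plus f g x lf lg H1 H2). Qed.

Definition lipS (U : pt -> Prop) (f : pt -> R) :=
  exists C, 0 <= C /\ forall z z', U z -> U z' -> Rabs (f z - f z') <= C * pdist z z'.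

Lemma lipS_const U a : lipS U (fun _ => a).
Proof. exists 0. split. lra. intros. rewrite Rminus_diag, Rabs_R0. lra. Qed.

Lemma lipS_plus U f g : lipS U f -> lipS U g -> lipS U (fun z => f z + g z).
Proof.
  intros [C1 [H1 L1]] [C2 [H2 L2]]. exists (C1 + C2). split. lra. intros z z' Hz Hz'.
  replace (f z + g z - (f z' + g z')) with ((f z - f z') + (g z - g z')) by ring.
  eapply Rle_trans. apply Rabs_triang. specialize (L1 z z' Hz Hz'). specialize (L2 z z' Hz Hz'). lra.
Qed.

Lemma lipS_scal U f a : lipS U f -> lipS U (fun z => a * f z).
Proof.
  intros [C [H L]]. exists (Rabs a * C). split. apply Rmult_le_pos; auto. apply Rabs_pos.
  intros z z' Hz Hz'. rewrite <- Rmult_minus_distr_l, Rabs_mult, Rmult_assoc.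
  apply Rmult_le_compat_l. apply Rabs_pos. auto.
Qed.

Lemma lipS_lsum {A} U (l : list A) (F : A -> pt -> R) :
  (forall a, In a l -> lipS U (F a)) -> lipS U (fun z => lsum l (fun a => F a z)).
Proof.
  induction l as [|a l IH]; intros H.
  - apply (lipS_const U 0).
  - apply (lipS_plus U (F a) (fun z => lsum l (fun a0 => F a0 z))). apply H; simpl; auto.
    apply IH; intros; apply H; simpl; auto.
Qed.

Lemma lipS_sum_f U (F : nat -> pt -> R) N :
  (forall M, (M <= N)%nat -> lipS U (F M)) -> lipS U (fun z => sum_f_R0 (fun M => F M z) N).
Proof.
  induction N; intros H.
  - simpl. apply H; auto.
  - simpl. apply (lipS_plus U (fun z => sum_f_R0 (fun M => F M z) N) (F (Datatypes.S N))).
    apply IHN; intros; apply H; lia. apply H; lia.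
Qed.

Lemma lipS_ext U f g : (forall z, f z = g z) -> lipS U f -> lipS U g.
Proof. intros E [C [H L]]. exists C. split; auto. intros. rewrite <- !E. auto. Qed.

Definition sliceok (U : pt -> Prop) (sl : R -> pt) := forall t t', pdist (sl t) (sl t') = Rabs (t - t').

Lemma lipS_cont_slice U f sl x (d : posreal) : lipS U f -> sliceok U sl ->
  (forall t, Boule x d t -> U (sl t)) -> forall t, Boule x d t -> continuity_pt (fun u => f (sl u)) t.
Proof.
  intros [C [HC L]] Hsl HB t Ht. unfold continuity_pt, continue_in, limit1_in, limit_in, D_x, no_cond, dist; simpl; unfold R_dist.
  intros eps He. unfold Boule in Ht.
  exists (Rmin (d - Rabs (t - x)) (eps / (C + 1))). split.
  - apply Rmin_glb_lt. lra. apply Rdiv_lt_0_compat; lra.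
  - intros u [_ Hu]. assert (Hu1 := Rmin_l (d - Rabs (t - x)) (eps / (C + 1))).
    assert (Hu2 := Rmin_r (d - Rabs (t - x)) (eps / (C + 1))).
    assert (Bu : Boule x d u). { unfold Boule. assert (H := Rabs_triang (u - t) (t - x)).
      replace (u - t + (t - x)) with (u - x) in H by ring. lra. }
    assert (Hl := L (sl u) (sl t) (HB u Bu) (HB t Ht)). rewrite Hsl in Hl.
    eapply Rle_lt_trans. apply Hl.
    apply Rle_lt_trans with (C * (eps / (C + 1))). apply Rmult_le_compat_l; lra.
    replace (C * (eps / (C + 1))) with (eps * (C / (C + 1))) by (field; lra).
    rewrite <- (Rmult_1_r eps) at 2. apply Rmult_lt_compat_l; auto.
    apply (Rmult_lt_reg_r (C + 1)). lra. unfold Rdiv. rewrite Rmult_assoc, Rinv_l; lra.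
Qed.

Lemma lipS_sub U V f : (forall z, V z -> U z) -> lipS U f -> lipS V f.
Proof. intros H [C [HC L]]. exists C. split; auto. Qed.

Lemma cont_in_sub U V g p : (forall z, V z -> U z) -> cont_in U g p -> cont_in V g p.
Proof. intros HVU H eps He. destruct (H eps He) as [d [Hd Hq]]. exists d. split; auto. Qed.

Lemma cont_in_scal U g a p : cont_in U g p -> cont_in U (fun z => a * g z) p.
Proof.
  intros H eps He. destruct (H (eps / (Rabs a + 1))) as [d [Hd Hq]].
  apply Rdiv_lt_0_compat; auto. pose proof (Rabs_pos a); lra.
  exists d. split; auto. intros q Uq Dq. rewrite <- Rmult_minus_distr_l, Rabs_mult.
  specialize (Hq q Uq Dq). pose proof (Rabs_pos a).
  apply Rle_lt_trans with (Rabs a * (eps / (Rabs a + 1))). apply Rmult_le_compat_l; lra.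
  replace (Rabs a * (eps / (Rabs a + 1))) with (eps * (Rabs a / (Rabs a + 1))) by (field; lra).
  rewrite <- (Rmult_1_r eps) at 2. apply Rmult_lt_compat_l; auto.
  apply (Rmult_lt_reg_r (Rabs a + 1)). lra. unfold Rdiv. rewrite Rmult_assoc, Rinv_l; lra.
Qed.

Lemma cont_in_plus U f g p : cont_in U f p -> cont_in U g p -> cont_in U (fun z => f z + g z) p.
Proof.
  intros H1 H2 eps He. destruct (H1 (eps/2)) as [d1 [Hd1 Hq1]]. lra.
  destruct (H2 (eps/2)) as [d2 [Hd2 Hq2]]. lra.
  exists (Rmin d1 d2). split. apply Rmin_glb_lt; auto. intros q Uq Dq.
  assert (A1 := Hq1 q Uq (Rlt_le_trans _ _ _ Dq (Rmin_l _ _))).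
  assert (A2 := Hq2 q Uq (Rlt_le_trans _ _ _ Dq (Rmin_r _ _))).
  replace (f q + g q - (f p + g p)) with ((f q - f p) + (g q - g p)) by ring.
  eapply Rle_lt_trans. apply Rabs_triang. lra.
Qed.

Lemma lipS_cont_in U f p : lipS U f -> U p -> cont_in U f p.
Proof.
  intros [C [HC L]] Up eps He. exists (eps / (C + 1)). split. apply Rdiv_lt_0_compat; lra.
  intros q Uq Dq. eapply Rle_lt_trans. apply L; auto.
  apply Rle_lt_trans with (C * (eps / (C + 1))). apply Rmult_le_compat_l; lra.
  replace (C * (eps / (C + 1))) with (eps * (C / (C + 1))) by (field; lra).
  rewrite <- (Rmult_1_r eps) at 2. apply Rmult_lt_compat_l; auto.
  apply (Rmult_lt_reg_r (C + 1)). lra. unfold Rdiv. rewrite Rmult_assoc, Rinv_l; lra.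
Qed.

Lemma harmonic_sub U V f : (forall z, V z -> U z) -> harmonic_on U f -> harmonic_on V f.
Proof.
  intros HVU [fx [fy [fxx [fxy [fyx [fyy H]]]]]].
  exists fx, fy, fxx, fxy, fyx, fyy. intros p Vp. destruct (H p (HVU p Vp)) as (A1 & A2 & A3 & A4 & A5 & A6 & C1 & C2 & C3 & C4 & E).
  repeat split; auto; eapply cont_in_sub; eauto.
Qed.

Lemma harmonic_plus U f g : harmonic_on U f -> harmonic_on U g -> harmonic_on U (fun z => f z + g z).
Proof.
  intros [fx [fy [fxx [fxy [fyx [fyy H]]]]]] [gx [gy [gxx [gxy [gyx [gyy G]]]]]].
  exists (fun z => fx z + gx z), (fun z => fy z + gy z), (fun z => fxx z + gxx z),
    (fun z => fxy z + gxy z), (fun z => fyx z + gyx z), (fun z => fyy z + gyy z).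
  intros p Up. destruct (H p Up) as (A1 & A2 & A3 & A4 & A5 & A6 & C1 & C2 & C3 & C4 & E).
  destruct (G p Up) as (B1 & B2 & B3 & B4 & B5 & B6 & D1 & D2 & D3 & D4 & F).
  repeat split; try (apply D_plus; auto); try (apply cont_in_plus; auto). lra.
Qed.

Lemma harmonic_scal U f a : harmonic_on U f -> harmonic_on U (fun z => a * f z).
Proof.
  intros [fx [fy [fxx [fxy [fyx [fyy H]]]]]].
  exists (fun z => a * fx z), (fun z => a * fy z), (fun z => a * fxx z),
    (fun z => a * fxy z), (fun z => a * fyx z), (fun z => a * fyy z).
  intros p Up. destruct (H p Up) as (A1 & A2 & A3 & A4 & A5 & A6 & C1 & C2 & C3 & C4 & E).
  repeat split; try (apply D_scal; auto); try (apply cont_in_scal; auto).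
  rewrite <- Rmult_plus_distr_l, E. ring.
Qed.

Lemma harmonic_ext U f g : (forall z, f z = g z) -> harmonic_on U f -> harmonic_on U g.
Proof.
  intros E [fx [fy [fxx [fxy [fyx [fyy H]]]]]]. exists fx, fy, fxx, fxy, fyx, fyy.
  intros p Up. destruct (H p Up) as (A1 & A2 & A3 & A4 & A5 & A6 & R').
  assert (Ef : g = f) by (apply functional_extensionality; intros; auto). subst g. repeat split; tauto.
Qed.

Lemma slice_x_ok y : sliceok (fun _ => True) (fun t => (t, y)).
Proof. intros t t'. unfold pdist, nsq, psub; simpl. replace (y - y) with 0 by ring.
  rewrite Rmult_0_r, Rplus_0_r. apply sqrt_Rsqr_abs. Qed.
Lemma slice_y_ok x : sliceok (fun _ => True) (fun t => (x, t)).
Proof. intros t t'. unfold pdist, nsq, psub; simpl. replace (x - x) with 0 by ring.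
  rewrite Rmult_0_r, Rplus_0_l. apply sqrt_Rsqr_abs. Qed.

Lemma klip_cont k z1 U p : KLip k -> (forall z, U z -> z <> z1) -> U p -> cont_in U (fun z => k (psub z z1)) p.
Proof.
  intros Hk HU Up. assert (Hp : 0 < pdist p z1) by (apply pdist_pos; auto).
  destruct (Hk (pdist p z1 / 2) ltac:(lra)) as [L [HL Hl]].
  intros eps He. exists (Rmin (pdist p z1 / 2) (eps / (L + 1))). split. apply Rmin_glb_lt; [lra|apply Rdiv_lt_0_compat; lra].
  intros q Uq Dq. assert (D1 := Rlt_le_trans _ _ _ Dq (Rmin_l _ _)). assert (D2 := Rlt_le_trans _ _ _ Dq (Rmin_r _ _)).
  assert (Hq : pdist p z1 / 2 <= nrm (psub q z1)).
  { change (nrm (psub q z1)) with (pdist q z1). assert (H := pdist_triang p q z1). rewrite pdist_sym in D1. lra. }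
  assert (Hp' : pdist p z1 / 2 <= nrm (psub p z1)). { change (nrm (psub p z1)) with (pdist p z1). lra. }
  specialize (Hl _ _ Hq Hp'). assert (E : nrm (psub (psub q z1) (psub p z1)) = pdist q p).
  { unfold nrm, pdist, nsq, psub; simpl. f_equal. ring. }
  rewrite E in Hl. eapply Rle_lt_trans. apply Hl.
  apply Rle_lt_trans with (L * (eps / (L + 1))). apply Rmult_le_compat_l; lra.
  replace (L * (eps / (L + 1))) with (eps * (L / (L + 1))) by (field; lra).
  rewrite <- (Rmult_1_r eps) at 2. apply Rmult_lt_compat_l; auto.
  apply (Rmult_lt_reg_r (L + 1)). lra. unfold Rdiv. rewrite Rmult_assoc, Rinv_l; lra.
Qed.

Lemma harmonic_k0 U z1 : (forall z, U z -> z <> z1) -> harmonic_on U (fun z => k0 (psub z z1)).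
Proof.
  intros HU.
  exists (fun z => k1 (psub z z1)), (fun z => k2 (psub z z1)), (fun z => k3 (psub z z1)),
    (fun z => k4 (psub z z1)), (fun z => k4 (psub z z1)), (fun z => k5 (psub z z1)).
  intros p Up. assert (Hn : 0 < nsq (psub p z1)) by (apply nsq_pos_of, pdist_pos; auto).
  repeat split.
  - apply Dk0x; auto.
  - apply Dk0y; auto.
  - apply Dk1x; auto.
  - apply Dk1y; auto.
  - apply Dk2x; auto.
  - apply Dk2y; auto.
  - apply klip_cont; auto. apply k3_lip.
  - apply klip_cont; auto. apply k4_lip.
  - apply klip_cont; auto. apply k4_lip.
  - apply klip_cont; auto. apply k5_lip.
  - unfold k5. ring.
Qed.

Lemma fold_Rmax_ge_a a l : a <= fold_right Rmax a l.
Proof. induction l; simpl. lra. eapply Rle_trans. apply IHl. apply Rmax_r. Qed.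
Lemma fold_Rmax_ge_in a l x : In x l -> x <= fold_right Rmax a l.
Proof. induction l; simpl. tauto. intros [->|H]. apply Rmax_l. eapply Rle_trans. apply IHl; auto. apply Rmax_r. Qed.

Lemma fin_pos_min (f : nat -> R) n : (forall i, (i < n)%nat -> 0 < f i) ->
  exists d, 0 < d /\ forall i, (i < n)%nat -> d <= f i.
Proof.
  induction n; intros H.
  - exists 1. split. lra. intros; lia.
  - destruct IHn as [d [Hd Hdi]]. intros; apply H; lia.
    exists (Rmin d (f n)). split. apply Rmin_glb_lt; auto.
    intros i Hi. destruct (Nat.eq_dec i n). subst. apply Rmin_r.
    eapply Rle_trans. apply Rmin_l. apply Hdi. lia.
Qed.

Definition hd_or (j : nat) (v : list nat) : nat := match v with [] => j | i :: _ => i end.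

Section Setup.
Variable K : nat.
Variable c : nat -> pt.
Variable r : nat -> R.
Variable z0 : pt.
Hypothesis HK : (2 <= K)%nat.
Hypothesis Hr : forall j, (j < K)%nat -> r j > 0.
Hypothesis Hdisj : forall i j, (i < K)%nat -> (j < K)%nat -> i <> j ->
             pdist (c i) (c j) > r i + r j.
Hypothesis Hz0 : Dom K c r z0.
Hypothesis HP : (INR K - 1) * P_max K c r z0 ^ 2 < 1.

Let P := P_max K c r z0.
Let T i := inv_circle (c i) (r i).
Let wp := word_point c r.

Lemma Pj_z0 j : r j / pdist z0 (c j) <= P_j K c r z0 j.
Proof. apply fold_Rmax_ge_a. Qed.
Lemma Pj_l j l : (l < K)%nat -> l <> j -> r j / (pdist (c j) (c l) - r l) <= P_j K c r z0 j.
Proof. intros Hl Hlj. apply fold_Rmax_ge_in. apply in_map_iff. exists l. split; auto.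
  apply filter_In. split. apply in_seq. lia. apply Bool.negb_true_iff, Nat.eqb_neq; auto. Qed.
Lemma P_ge j : (j < K)%nat -> P_j K c r z0 j <= P.
Proof. intros Hj. apply fold_Rmax_ge_in. apply in_map_iff. exists j. split; auto. apply in_seq; lia. Qed.

Lemma P_pos : 0 < P.
Proof.
  assert (H0 : (0 < K)%nat) by lia.
  eapply Rlt_le_trans. 2: apply (P_ge 0 H0). eapply Rlt_le_trans. 2: apply Pj_z0.
  assert (Hd := Hz0 0%nat H0). assert (Hr0 := Hr 0%nat H0). apply Rdiv_lt_0_compat; lra.
Qed.

Lemma P_lt1 : P < 1.
Proof.
  assert (HK1 : 1 <= INR K - 1). { assert (2 <= INR K) by (replace 2 with (INR 2) by (simpl; lra); apply le_INR; lia). lra. }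
  assert (HPp := P_pos). fold P in HP.
  assert (P ^ 2 < 1) by nra. nra.
Qed.

Definition inD j x := pdist x (c j) <= r j * P.
Definition good i x := 0 < pdist x (c i) /\ r i / pdist x (c i) <= P.

Lemma good_z0 i : (i < K)%nat -> good i z0.
Proof. intros Hi. assert (H:= Hz0 i Hi). assert (Hri := Hr i Hi). split. lra.
  eapply Rle_trans. apply Pj_z0. apply P_ge; auto. Qed.

Lemma good_inD i h x : (i < K)%nat -> (h < K)%nat -> h <> i -> inD h x -> good i x.
Proof.
  intros Hi Hh Hhi Hx. unfold inD in Hx.
  assert (Hd := Hdisj i h Hi Hh (not_eq_sym Hhi)). assert (Hri := Hr i Hi). assert (Hrh := Hr h Hh).
  assert (Htr := pdist_triang (c i) x (c h)). rewrite (pdist_sym (c i) x) in Htr.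
  assert (HP1 := P_lt1). assert (HP0 := P_pos).
  assert (Hlow : pdist (c i) (c h) - r h <= pdist x (c i)). { nra. }
  split. lra.
  eapply Rle_trans. 2: { eapply Rle_trans. apply (Pj_l i h Hh Hhi). apply P_ge; auto. }
  apply Rmult_le_compat_l. lra. apply Rinv_le_contravar; lra.
Qed.

Lemma good_T_inD i x : (i < K)%nat -> good i x -> inD i (T i x).
Proof.
  intros Hi [H1 H2]. unfold inD, T. rewrite inv_center; auto.
  replace (r i * r i / pdist x (c i)) with (r i * (r i / pdist x (c i))) by (field; lra).
  apply Rmult_le_compat_l. assert (H := Hr i Hi); lra. auto.
Qed.

Lemma good_T_dist i x y : (i < K)%nat -> good i x -> good i y ->
  pdist (T i x) (T i y) <= P ^ 2 * pdist x y.
Proof.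
  intros Hi [H1 H2] [H3 H4]. unfold T. rewrite inv_dist; auto.
  assert (0 <= pdist x y) by apply pdist_ge0.
  replace (r i * r i * pdist x y / (pdist x (c i) * pdist y (c i))) with
   ((r i / pdist x (c i)) * (r i / pdist y (c i)) * pdist x y) by (field; lra).
  apply Rmult_le_compat_r; auto. simpl. rewrite Rmult_1_r. apply Rmult_le_compat; auto.
  apply Rlt_le, Rdiv_lt_0_compat; auto. apply Hr; auto.
  apply Rlt_le, Rdiv_lt_0_compat; auto. apply Hr; auto.
Qed.

Lemma wp_cons x i w : wp x (i :: w) = T i (wp x w).
Proof. reflexivity. Qed.

Lemma level_inD w : valid K w -> w <> [] -> inD (hd_or 0 w) (wp z0 w).
Proof.
  induction w as [|i w IH]; intros Hv Hne. congruence.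
  destruct Hv as [HF HC]. inversion HF; subst. simpl hd_or. rewrite wp_cons.
  apply good_T_inD; auto. destruct w as [|h w'].
  - apply good_z0; auto.
  - destruct HC as [Hih HC]. inversion H2; subst.
    apply (good_inD i h); auto. apply IH. split; auto. discriminate.
Qed.

Lemma contraction v : valid K v -> forall j a b, (j < K)%nat -> inD j a -> inD j b -> lne j v = true ->
  pdist (wp a v) (wp b v) <= P ^ (2 * length v) * pdist a b /\
  inD (hd_or j v) (wp a v) /\ inD (hd_or j v) (wp b v) /\ (hd_or j v < K)%nat.
Proof.
  induction v as [|i v IH]; intros Hv j a b Hj Ha Hb Hl.
  - simpl. rewrite Rmult_1_l. split. lra. auto.
  - destruct Hv as [HF HC]. inversion HF; subst.
    assert (Hv' : valid K v). { split; auto. destruct v; simpl in HC; tauto. }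
    assert (Hl' : lne j v = true). { destruct v. reflexivity. exact Hl. }
    destruct (IH Hv' j a b Hj Ha Hb Hl') as [Hd [Hia [Hib Hh]]].
    assert (Hneq : hd_or j v <> i).
    { destruct v as [|h v'].
      - simpl. simpl in Hl. intros ->. rewrite Nat.eqb_refl in Hl. discriminate.
      - simpl. destruct HC as [HC _]. auto. }
    assert (Ga := good_inD i _ _ H1 Hh Hneq Hia). assert (Gb := good_inD i _ _ H1 Hh Hneq Hib).
    rewrite !wp_cons. simpl hd_or. split; [|split; [|split]]; auto.
    + eapply Rle_trans. apply good_T_dist; auto.
      replace (2 * length (i :: v))%nat with (2 + 2 * length v)%nat by (simpl; lia).
      rewrite pow_add. assert (0 <= P^2) by (apply pow_le; left; apply P_pos).
      rewrite Rmult_assoc. apply Rmult_le_compat_l; auto.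
    + apply good_T_inD; auto.
    + apply good_T_inD; auto.
Qed.

Definition Rs := lsum (seq 0 K) r.

Lemma r_le_Rs m : (m < K)%nat -> r m <= Rs.
Proof.
  intros Hm. unfold Rs. rewrite <- (lsum_seq_single K m r Hm) at 1. apply lsum_le.
  intros i Hi. apply in_seq in Hi. destruct (Nat.eqb i m). lra. assert (H := Hr i ltac:(lia)). lra.
Qed.

Lemma inD_dist h a b : (h < K)%nat -> inD h a -> inD h b -> pdist a b <= 2 * Rs.
Proof.
  intros Hh Ha Hb. unfold inD in *. assert (H := pdist_triang a (c h) b). rewrite (pdist_sym (c h) b) in H.
  assert (H1 := r_le_Rs h Hh). assert (H2 := P_lt1). assert (H3 := P_pos). assert (H4 := Hr h Hh). nra.
Qed.

Lemma lne_app k u m : lne k (u ++ [m]) = negb (Nat.eqb k m).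
Proof.
  assert (E : u ++ [m] = (u ++ [m])) by reflexivity.
  unfold lne. destruct (u ++ [m]) eqn:Hum. destruct u; discriminate.
  rewrite <- Hum, last_last. reflexivity.
Qed.

Lemma step_diff n u k : In u (words K (S n)) -> (k < K)%nat -> lne k u = true ->
  pdist (wp z0 u) (wp z0 (u ++ [k])) <= P ^ (2 * n) * (2 * Rs).
Proof.
  intros Hu Hk Hl. destruct (words_valid _ _ _ Hu) as [Hv Hlen].
  destruct u as [|a u0] using rev_ind. simpl in Hlen; discriminate. clear IHu0.
  rename a into m, u0 into u'.
  rewrite length_app in Hlen. simpl in Hlen.
  destruct (valid_app_last _ _ _ Hv) as [Hv' [Hm Hl']].
  assert (Hkm : k <> m). { intros ->. rewrite lne_app, Nat.eqb_refl in Hl. discriminate. }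
  unfold wp. rewrite !word_point_app. fold wp.
  assert (Ga : inD m (T m z0)) by (apply good_T_inD; auto; apply good_z0; auto).
  assert (Gb : inD m (T m (T k z0))).
  { apply good_T_inD; auto. apply (good_inD m k); auto. apply good_T_inD; auto. apply good_z0; auto. }
  destruct (contraction u' Hv' m _ _ Hm Ga Gb Hl') as [Hd _].
  eapply Rle_trans. apply Hd. replace (length u') with n by lia.
  apply Rmult_le_compat_l. apply pow_le. left; apply P_pos.
  apply (inD_dist m); auto.
Qed.

Lemma valid_snoc u k : valid K u -> (k < K)%nat -> lne k u = true -> valid K (u ++ [k]).
Proof.
  induction u as [|a u IH]; intros [HF HC] Hk Hl.
  - split. constructor; auto. exact I.
  - inversion HF; subst. assert (Hv : valid K u). { split; auto. destruct u; simpl in HC; tauto. }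
    assert (Hl' : lne k u = true). { destruct u. reflexivity. exact Hl. }
    destruct (IH Hv Hk Hl') as [HF' HC']. split.
    + simpl. constructor; auto.
    + simpl. destruct u as [|b u'].
      * simpl. split; auto. intros ->. simpl in Hl. rewrite Nat.eqb_refl in Hl. discriminate.
      * simpl in HC |- *. split; [tauto|]. exact HC'.
Qed.

Definition Bw (chi : list nat -> R) (phi : pt -> R) M :=
  lsum (words K M) (fun w => chi w * phi (wp z0 w)).

Definition Lip_in (phi : pt -> R) (L : R) :=
  forall h a b, (h < K)%nat -> inD h a -> inD h b -> Rabs (phi a - phi b) <= L * pdist a b.

Lemma cauchy_step chi phi L n :
  (forall u k, u <> [] -> chi (u ++ [k]) = chi u) -> (forall u, Rabs (chi u) <= 1) -> 0 <= L ->
  Lip_in phi L ->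
  Rabs ((INR K - 1) * Bw chi phi (S n) - Bw chi phi (S (S n))) <=
    INR K * (INR K - 1) ^ n * (INR K - 1) * (L * (P ^ (2 * n) * (2 * Rs))).
Proof.
  intros Hchi Hc1 HL Hphi. unfold Bw. rewrite (words_app_sum K (S n)).
  rewrite <- lsum_scal.
  rewrite (lsum_ext_in (words K (S n)) (fun a => (INR K - 1) * (chi a * phi (wp z0 a)))
    (fun u => lsum (seq 0 K) (fun k => if lne k u then chi u * phi (wp z0 u) else 0))).
  2:{ intros u Hu. destruct (words_valid _ _ _ Hu) as [Hv Hl]. rewrite count_lne; auto.
      intros ->. simpl in Hl. discriminate. }
  rewrite <- lsum_minus.
  eapply Rle_trans. apply lsum_abs.
  set (b := L * (P ^ (2 * n) * (2 * Rs))).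
  assert (Hb : 0 <= b). { unfold b. apply Rmult_le_pos; auto. apply Rmult_le_pos. apply pow_le. left; apply P_pos.
    assert (0 < Rs). { eapply Rlt_le_trans. 2: apply (r_le_Rs 0). apply Hr. lia. lia. } lra. }
  eapply Rle_trans with (lsum (words K (S n)) (fun _ => (INR K - 1) * b)).
  - apply lsum_le. intros u Hu. destruct (words_valid _ _ _ Hu) as [Hv Hl].
    assert (Hne : u <> []). { intros ->. simpl in Hl. discriminate. }
    rewrite <- (count_lne K u b Hv Hne). rewrite <- lsum_minus.
    eapply Rle_trans. apply lsum_abs. apply lsum_le. intros k Hk. apply in_seq in Hk.
    destruct (lne k u) eqn:Hlk. 2: { rewrite Rminus_0_r, Rabs_R0. lra. }
    rewrite Hchi; auto. rewrite <- Rmult_minus_distr_l, Rabs_mult.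
    assert (Hvk := valid_snoc u k Hv ltac:(lia) Hlk).
    assert (Hi1 := level_inD u Hv Hne).
    assert (Hi2 := level_inD (u ++ [k]) Hvk ltac:(destruct u; discriminate)).
    replace (hd_or 0 (u ++ [k])) with (hd_or 0 u) in Hi2 by (destruct u; [congruence|reflexivity]).
    assert (Hh : (hd_or 0 u < K)%nat). { destruct Hv as [HF _]. destruct u. congruence. inversion HF; auto. }
    assert (H1 := Hphi _ _ _ Hh Hi1 Hi2).
    assert (H2 := step_diff n u k Hu ltac:(lia) Hlk).
    assert (H3 := Hc1 u). assert (0 <= Rabs (chi u)) by apply Rabs_pos.
    assert (0 <= Rabs (phi (wp z0 u) - phi (wp z0 (u ++ [k])))) by apply Rabs_pos.
    rewrite <- (Rmult_1_l b). apply Rmult_le_compat; auto. eapply Rle_trans. apply H1. unfold b. apply Rmult_le_compat_l; auto.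
  - rewrite lsum_const, length_words_S by lia. lra.
Qed.

Definition B1 phi M := Bw (fun _ => 1) phi M.

Definition SA1 phi N :=
  sum_f_R0 (fun M => if Nat.eqb M 0 then 0 else (-1) ^ M * B1 phi M) N
  + (-1) ^ (S N) / INR K * B1 phi (S N).

Lemma INR_K_pos : 0 < INR K.
Proof. apply lt_0_INR. lia. Qed.
Lemma INR_K1 : 1 <= INR K - 1.
Proof. assert (2 <= INR K) by (replace 2 with (INR 2) by (simpl; lra); apply le_INR; lia). lra. Qed.

Lemma SA1_step phi n : SA1 phi (S n) - SA1 phi n =
  (-1) ^ (S n) / INR K * ((INR K - 1) * B1 phi (S n) - B1 phi (S (S n))).
Proof.
  unfold SA1. simpl sum_f_R0 at 1. replace (Nat.eqb (S n) 0) with false by reflexivity.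
  assert (H := INR_K_pos). simpl pow. field. lra.
Qed.

Definition qq := (INR K - 1) * P ^ 2.
Lemma qq_bounds : 0 <= qq < 1.
Proof. unfold qq. split. assert (H := INR_K1). apply Rmult_le_pos. lra. apply pow_le. left; apply P_pos. exact HP. Qed.

Lemma SA1_step_bound phi L n : 0 <= L -> Lip_in phi L ->
  Rabs (SA1 phi (S n) - SA1 phi n) <= (INR K - 1) * (L * (2 * Rs)) * qq ^ n.
Proof.
  intros HL Hphi. rewrite SA1_step, Rabs_mult.
  assert (E : Rabs ((-1) ^ S n / INR K) = / INR K).
  { unfold Rdiv. rewrite Rabs_mult, pow_1_abs, Rabs_inv, Rabs_right. ring. left; apply INR_K_pos. }
  rewrite E. unfold B1.
  assert (H := cauchy_step (fun _ => 1) phi L n ltac:(auto) ltac:(intros; cbv beta; rewrite Rabs_R1; lra) HL Hphi).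
  assert (HK0 := INR_K_pos).
  apply Rmult_le_compat_l with (r := / INR K) in H. 2: left; apply Rinv_0_lt_compat; auto.
  eapply Rle_trans. apply H. unfold qq. rewrite pow_mult, Rpow_mult_distr.
  right. field. lra.
Qed.

Lemma SA1_cauchy phi L m n : 0 <= L -> Lip_in phi L -> (n <= m)%nat ->
  Rabs (SA1 phi m - SA1 phi n) <= (INR K - 1) * (L * (2 * Rs)) / (1 - qq) * qq ^ n.
Proof.
  intros HL Hphi Hnm. set (C := (INR K - 1) * (L * (2 * Rs))).
  assert (Hq := qq_bounds).
  assert (HC : 0 <= C). { unfold C. assert (H := INR_K1). assert (0 < Rs). { eapply Rlt_le_trans. 2: apply (r_le_Rs 0). apply Hr. lia. lia. }
    apply Rmult_le_pos. lra. nra. }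
  assert (Hs : Rabs (SA1 phi m - SA1 phi n) <= C * (qq ^ n - qq ^ m) / (1 - qq)).
  { induction Hnm. rewrite Rminus_diag, Rabs_R0. unfold Rdiv. rewrite Rminus_diag, Rmult_0_r, Rmult_0_l. lra.
    replace (SA1 phi (S m) - SA1 phi n) with ((SA1 phi (S m) - SA1 phi m) + (SA1 phi m - SA1 phi n)) by ring.
    eapply Rle_trans. apply Rabs_triang. assert (H1 := SA1_step_bound phi L m HL Hphi). fold C in H1.
    replace (C * (qq ^ n - qq ^ S m) / (1 - qq)) with (C * qq ^ m + C * (qq ^ n - qq ^ m) / (1 - qq)).
    lra. simpl. field. lra. }
  eapply Rle_trans. apply Hs. assert (Hi : 0 < / (1 - qq)) by (apply Rinv_0_lt_compat; lra).
  assert (0 <= qq ^ m) by (apply pow_le; lra).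
  replace (C / (1 - qq) * qq ^ n) with (C * qq ^ n * / (1 - qq)) by (unfold Rdiv; ring).
  unfold Rdiv. apply Rmult_le_compat_r. lra. apply Rmult_le_compat_l; lra.
Qed.


Definition Ext z := forall j, (j < K)%nat -> r j <= pdist z (c j).

Lemma Dom_Ext z : Dom K c r z -> Ext z.
Proof. intros H j Hj. left. apply H; auto. Qed.

Lemma inD_far z h a : Ext z -> (h < K)%nat -> inD h a -> r h * (1 - P) <= pdist z a.
Proof.
  intros Hz Hh Ha. unfold inD in Ha. assert (H := pdist_triang z a (c h)). assert (H1 := Hz h Hh).
  lra.
Qed.

Lemma d0_exists : exists d0, 0 < d0 /\ forall h, (h < K)%nat -> d0 <= r h * (1 - P).
Proof.
  apply fin_pos_min. intros i Hi. assert (H := Hr i Hi). assert (H1 := P_lt1). nra.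
Qed.

Definition d0 := proj1_sig (constructive_indefinite_description _ d0_exists).
Lemma d0_pos : 0 < d0.
Proof. unfold d0. destruct (constructive_indefinite_description _ _) as [x [H1 H2]]. simpl. auto. Qed.
Lemma d0_le h : (h < K)%nat -> d0 <= r h * (1 - P).
Proof. unfold d0. destruct (constructive_indefinite_description _ _) as [x [H1 H2]]. simpl. auto. Qed.

Lemma far z h a : Ext z -> (h < K)%nat -> inD h a -> d0 <= pdist z a.
Proof. intros. eapply Rle_trans. apply d0_le; eauto. apply inD_far; auto. Qed.

Lemma level_far z w : Ext z -> valid K w -> w <> [] -> d0 <= pdist z (wp z0 w).
Proof.
  intros Hz Hv Hne. apply (far z (hd_or 0 w)); auto. 2: apply level_inD; auto.
  destruct Hv as [HF _]. destruct w. congruence. inversion HF; auto.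
Qed.

Lemma norm_psub_psub z a b : nrm (psub (psub z a) (psub z b)) = pdist a b.
Proof. unfold nrm, pdist, nsq, psub; simpl. f_equal. ring. Qed.

Definition kphi (k : pt -> R) (z : pt) := fun zeta => k (psub z zeta).

Lemma klip_Lip k : KLip k -> exists L, 0 <= L /\ forall z, Ext z -> Lip_in (kphi k z) L.
Proof.
  intros Hk. destruct (Hk d0 d0_pos) as [L [HL H]]. exists L. split; auto.
  intros z Hz h a b Hh Ha Hb. unfold kphi. rewrite <- norm_psub_psub with (z := z).
  apply H; apply (far z h); auto.
Qed.

Definition SK k n z := SA1 (kphi k z) n.

Lemma SK_unif k : KLip k -> exists C, exists G : pt -> R,
  forall z, Ext z -> forall n, Rabs (SK k n z - G z) <= C * qq ^ n.
Proof.
  intros Hk. destruct (klip_Lip k Hk) as [L [HL HLip]].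
  set (C := (INR K - 1) * (L * (2 * Rs)) / (1 - qq)). exists C.
  apply (unif_limit Ext (fun n z => SK k n z) C qq qq_bounds).
  intros z m n Hz Hnm. apply (SA1_cauchy _ L); auto.
Qed.


Lemma level_pos z M w : Ext z -> In w (words K (S M)) -> 0 < nsq (psub z (wp z0 w)).
Proof.
  intros Hz Hw. destruct (words_valid _ _ _ Hw) as [Hv Hl]. apply nsq_pos_of.
  eapply Rlt_le_trans. apply d0_pos. apply level_far; auto. intros ->. simpl in Hl. discriminate.
Qed.

Lemma SK_deriv k k' N sl t0 : Ext (sl t0) ->
  (forall zeta, 0 < nsq (psub (sl t0) zeta) ->
     derivable_pt_lim (fun t => k (psub (sl t) zeta)) t0 (k' (psub (sl t0) zeta))) ->
  derivable_pt_lim (fun t => SK k N (sl t)) t0 (SK k' N (sl t0)).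
Proof.
  intros Hz Hk. unfold SK, SA1, B1, Bw, kphi.
  apply D_plus.
  - apply (D_sum_f (fun M t => if Nat.eqb M 0 then 0 else (-1) ^ M * lsum (words K M) (fun w => 1 * k (psub (sl t) (wp z0 w))))).
    intros M HM. destruct M. simpl. apply derivable_pt_lim_const.
    simpl Nat.eqb. cbv iota. apply D_scal. apply (D_lsum _ (fun w t => 1 * k (psub (sl t) (wp z0 w)))).
    intros w Hw. apply D_scal. apply Hk. apply (level_pos _ M); auto.
  - apply D_scal. apply (D_lsum _ (fun w t => 1 * k (psub (sl t) (wp z0 w)))).
    intros w Hw. apply D_scal. apply Hk. apply (level_pos _ N); auto.
Qed.

Lemma norm_psub_psub2 z z' a : nrm (psub (psub z a) (psub z' a)) = pdist z z'.
Proof. unfold nrm, pdist, nsq, psub; simpl. f_equal. ring. Qed.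

Lemma SK_lip k N : KLip k -> lipS Ext (SK k N).
Proof.
  intros Hk. destruct (Hk d0 d0_pos) as [L [HL Hl]].
  assert (Hterm : forall M w, In w (words K (S M)) -> lipS Ext (fun z => 1 * k (psub z (wp z0 w)))).
  { intros M w Hw. apply lipS_scal. exists L. split; auto. intros z z' Hz Hz'.
    rewrite <- (norm_psub_psub2 z z' (wp z0 w)). destruct (words_valid _ _ _ Hw) as [Hv Hlen].
    apply Hl; apply level_far; auto; intros ->; simpl in Hlen; discriminate. }
  unfold SK, SA1, B1, Bw, kphi.
  apply (lipS_plus Ext (fun z => sum_f_R0 (fun M => if Nat.eqb M 0 then 0 else (-1) ^ M * lsum (words K M) (fun w => 1 * k (psub z (wp z0 w)))) N)).
  - apply (lipS_sum_f Ext (fun M z => if Nat.eqb M 0 then 0 else (-1) ^ M * lsum (words K M) (fun w => 1 * k (psub z (wp z0 w))))).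
    intros M HM. destruct M. apply (lipS_const Ext 0). simpl Nat.eqb. cbv iota.
    apply lipS_scal. apply (lipS_lsum Ext _ (fun w z => 1 * k (psub z (wp z0 w)))). intros w Hw. apply (Hterm M); auto.
  - apply lipS_scal. apply (lipS_lsum Ext _ (fun w z => 1 * k (psub z (wp z0 w)))). intros w Hw. apply (Hterm N); auto.
Qed.


Lemma Dom_ball p : Dom K c r p -> exists d, 0 < d /\ forall q, pdist q p < d -> Dom K c r q.
Proof.
  intros Hp. destruct (fin_pos_min (fun j => pdist p (c j) - r j) K) as [d [Hd Hdj]].
  intros i Hi. assert (H := Hp i Hi). lra.
  exists d. split; auto. intros q Hq j Hj. assert (H := Hdj j Hj). assert (T1 := pdist_triang p q (c j)).
  rewrite (pdist_sym p q) in T1. unfold gt. lra.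
Qed.

Definition ubound k G := exists C, forall z, Ext z -> forall n, Rabs (SK k n z - G z) <= C * qq ^ n.

Lemma limit_deriv k k' G G' sl t0 :
  ubound k G -> ubound k' G' -> sliceok (fun _ => True) sl -> Dom K c r (sl t0) ->
  (forall t zeta, 0 < nsq (psub (sl t) zeta) ->
     derivable_pt_lim (fun u => k (psub (sl u) zeta)) t (k' (psub (sl t) zeta))) ->
  derivable_pt_lim (fun t => G (sl t)) t0 (G' (sl t0)).
Proof.
  intros [C HC] [C' HC'] Hsl Hp Hk. destruct (Dom_ball _ Hp) as [d [Hd Hball]].
  set (dd := mkposreal d Hd).
  assert (HB : forall t, Boule t0 dd t -> Ext (sl t)).
  { intros t Ht. apply Dom_Ext, Hball. rewrite Hsl. exact Ht. }
  apply (CVU_derivable (fun n t => SK k n (sl t)) (fun n t => SK k' n (sl t)) (fun t => G (sl t)) (fun t => G' (sl t)) t0 dd).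
  - intros eps He. destruct (geom_small C' qq eps qq_bounds He) as [N HN]. exists N.
    intros n y Hn Hy. rewrite Rabs_minus_sym. eapply Rle_lt_trans. apply HC'; auto. apply HN; lia.
  - intros x Hx eps He. destruct (geom_small C qq eps qq_bounds He) as [N HN]. exists N.
    intros n Hn. unfold R_dist. eapply Rle_lt_trans. apply HC; auto. apply HN; lia.
  - intros n x Hx. apply (SK_deriv k k' n sl x); auto.
  - unfold Boule. simpl. rewrite Rminus_diag, Rabs_R0. auto.
Qed.

Lemma limit_cont k G U p : KLip k -> ubound k G -> (forall z, U z -> Ext z) -> U p -> cont_in U G p.
Proof.
  intros Hk [C HC] HU Up eps He.
  destruct (geom_small C qq (eps / 3) qq_bounds ltac:(lra)) as [N HN].
  destruct (SK_lip k N Hk) as [L [HL Hl]].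
  exists (eps / 3 / (L + 1)). split. apply Rdiv_lt_0_compat; lra.
  intros q Uq Dq.
  assert (A1 := HC q (HU q Uq) N). assert (A2 := HC p (HU p Up) N). assert (A3 := Hl q p (HU q Uq) (HU p Up)).
  assert (A4 := HN N (le_n N)).
  assert (A5 : L * pdist q p <= eps / 3).
  { apply Rle_trans with (L * (eps / 3 / (L + 1))). apply Rmult_le_compat_l; lra.
    replace (L * (eps / 3 / (L + 1))) with (eps / 3 * (L / (L + 1))) by (field; lra).
    rewrite <- (Rmult_1_r (eps / 3)) at 2. apply Rmult_le_compat_l. lra.
    apply (Rmult_le_reg_r (L + 1)). lra. unfold Rdiv. rewrite Rmult_assoc, Rinv_l; lra. }
  replace (G q - G p) with ((G q - SK k N q) + (SK k N q - SK k N p) + (SK k N p - G p)) by ring.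
  eapply Rle_lt_trans. apply Rabs_triang. eapply Rle_lt_trans. apply Rplus_le_compat_r. apply Rabs_triang.
  rewrite Rabs_minus_sym in A1. lra.
Qed.

Lemma SA1_opp phi psi n : (forall z, psi z = - phi z) -> SA1 psi n = - SA1 phi n.
Proof.
  intros E. unfold SA1, B1, Bw.
  assert (EB : forall M, lsum (words K M) (fun w => 1 * psi (wp z0 w)) = - lsum (words K M) (fun w => 1 * phi (wp z0 w))).
  { intros M. rewrite <- lsum_opp. apply lsum_ext_in. intros w _. rewrite E. ring. }
  assert (ES : forall N, sum_f_R0 (fun M => if Nat.eqb M 0 then 0 else (-1) ^ M * lsum (words K M) (fun w => 1 * psi (wp z0 w))) N =
     - sum_f_R0 (fun M => if Nat.eqb M 0 then 0 else (-1) ^ M * lsum (words K M) (fun w => 1 * phi (wp z0 w))) N).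
  { induction N. cbn [sum_f_R0 Nat.eqb]. ring. rewrite tech5, tech5, IHN. cbv beta. replace (Nat.eqb (S N) 0) with false by reflexivity. rewrite EB. ring. }
  rewrite ES, EB. ring.
Qed.

Lemma SK_k35 n z : SK k3 n z + SK k5 n z = 0.
Proof. unfold SK. rewrite (SA1_opp (kphi k3 z) (kphi k5 z)). ring. intros; reflexivity. Qed.

Lemma sl_x_eq (p : pt) : (fun t => (t, snd p)) (fst p) = p.
Proof. destruct p; reflexivity. Qed.
Lemma sl_y_eq (p : pt) : (fun t => (fst p, t)) (snd p) = p.
Proof. destruct p; reflexivity. Qed.

Lemma harmonic_hN a N : harmonic_on (Dom K c r) (fun z => a * SK k0 N z).
Proof.
  apply harmonic_scal.
  exists (SK k1 N), (SK k2 N), (SK k3 N), (SK k4 N), (SK k4 N), (SK k5 N).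
  intros p Hp. assert (He := Dom_Ext p Hp).
  assert (Hx : forall k k', (forall q zeta, 0 < nsq (psub q zeta) -> derivable_pt_lim (fun t => k (psub (t, snd q) zeta)) (fst q) (k' (psub q zeta))) ->
     derivable_pt_lim (fun t => SK k N (t, snd p)) (fst p) (SK k' N p)).
  { intros k k' Hk. rewrite <- (sl_x_eq p) at 2. apply (SK_deriv k k' N (fun t => (t, snd p)) (fst p)).
    rewrite sl_x_eq; auto. intros zeta Hz. apply (Hk ((fun t => (t, snd p)) (fst p))). auto. }
  assert (Hy : forall k k', (forall q zeta, 0 < nsq (psub q zeta) -> derivable_pt_lim (fun t => k (psub (fst q, t) zeta)) (snd q) (k' (psub q zeta))) ->
     derivable_pt_lim (fun t => SK k N (fst p, t)) (snd p) (SK k' N p)).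
  { intros k k' Hk. rewrite <- (sl_y_eq p) at 2. apply (SK_deriv k k' N (fun t => (fst p, t)) (snd p)).
    rewrite sl_y_eq; auto. intros zeta Hz. apply (Hk ((fun t => (fst p, t)) (snd p))). auto. }
  repeat split.
  - apply Hx. apply Dk0x.
  - apply Hy. apply Dk0y.
  - apply Hx. apply Dk1x.
  - apply Hy. apply Dk1y.
  - apply Hx. apply Dk2x.
  - apply Hy. apply Dk2y.
  - apply lipS_cont_in; auto. apply (lipS_sub Ext). apply Dom_Ext. apply SK_lip, k3_lip.
  - apply lipS_cont_in; auto. apply (lipS_sub Ext). apply Dom_Ext. apply SK_lip, k4_lip.
  - apply lipS_cont_in; auto. apply (lipS_sub Ext). apply Dom_Ext. apply SK_lip, k4_lip.
  - apply lipS_cont_in; auto. apply (lipS_sub Ext). apply Dom_Ext. apply SK_lip, k5_lip.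
  - apply SK_k35.
Qed.



Lemma limit_sum0 G3 G5 z : ubound k3 G3 -> ubound k5 G5 -> Ext z -> G3 z + G5 z = 0.
Proof.
  intros [C3 H3] [C5 H5] Hz.
  destruct (Req_dec (G3 z + G5 z) 0) as [E|E]; auto. exfalso.
  set (e := Rabs (G3 z + G5 z)). assert (He : 0 < e) by (apply Rabs_pos_lt; auto).
  destruct (geom_small (C3 + C5) qq e qq_bounds He) as [N HN].
  specialize (HN N (le_n N)). assert (A := H3 z Hz N). assert (B := H5 z Hz N).
  assert (S0 := SK_k35 N z).
  assert (e <= Rabs (SK k3 N z - G3 z) + Rabs (SK k5 N z - G5 z)).
  { unfold e. replace (G3 z + G5 z) with (- ((SK k3 N z - G3 z) + (SK k5 N z - G5 z))) by lra.
    rewrite Rabs_Ropp. apply Rabs_triang. }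
  lra.
Qed.

Lemma harmonic_G a G0 G1 G2 G3 G4 G5 :
  ubound k0 G0 -> ubound k1 G1 -> ubound k2 G2 -> ubound k3 G3 -> ubound k4 G4 -> ubound k5 G5 ->
  harmonic_on (Dom K c r) (fun z => a * G0 z).
Proof.
  intros U0 U1 U2 U3 U4 U5. apply harmonic_scal.
  exists G1, G2, G3, G4, G4, G5. intros [x y] Hp.
  assert (Sx := slice_x_ok y). assert (Sy := slice_y_ok x).
  repeat split.
  - apply (limit_deriv k0 k1 G0 G1 (fun t => (t, y)) x); auto. intros t zeta H. apply (Dk0x (t, y)); auto.
  - apply (limit_deriv k0 k2 G0 G2 (fun t => (x, t)) y); auto. intros t zeta H. apply (Dk0y (x, t)); auto.
  - apply (limit_deriv k1 k3 G1 G3 (fun t => (t, y)) x); auto. intros t zeta H. apply (Dk1x (t, y)); auto.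
  - apply (limit_deriv k1 k4 G1 G4 (fun t => (x, t)) y); auto. intros t zeta H. apply (Dk1y (x, t)); auto.
  - apply (limit_deriv k2 k4 G2 G4 (fun t => (t, y)) x); auto. intros t zeta H. apply (Dk2x (t, y)); auto.
  - apply (limit_deriv k2 k5 G2 G5 (fun t => (x, t)) y); auto. intros t zeta H. apply (Dk2y (x, t)); auto.
  - apply (limit_cont k3); auto. apply k3_lip. apply Dom_Ext.
  - apply (limit_cont k4); auto. apply k4_lip. apply Dom_Ext.
  - apply (limit_cont k4); auto. apply k4_lip. apply Dom_Ext.
  - apply (limit_cont k5); auto. apply k5_lip. apply Dom_Ext.
  - apply limit_sum0; auto. apply Dom_Ext; auto.
Qed.


Definition SAf phi N :=
  sum_f_R0 (fun M => (-1) ^ M * B1 phi M) N + (-1) ^ (S N) / INR K * B1 phi (S N).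

Lemma level_B1 M z : level_sum K c r z0 M z = B1 (kphi k0 z) M.
Proof. unfold B1, Bw, level_sum. change (fold_right Rplus 0 (map (fun w => ln (pdist z (word_point c r z0 w))) (words K M)))
  with (lsum (words K M) (fun w => ln (pdist z (word_point c r z0 w)))). apply lsum_ext_in. intros w _. rewrite Rmult_1_l. reflexivity. Qed.

Lemma star_SAf N z : psi_s_star K c r z0 N z = - / (2 * PI) * SAf (kphi k0 z) N.
Proof.
  unfold psi_s_star, psi_s, SAf. rewrite tech5.
  rewrite (sum_eq (fun M => (-1) ^ M * level_sum K c r z0 M z) (fun M => (-1) ^ M * B1 (kphi k0 z) M)).
  2: { intros i _. rewrite level_B1. reflexivity. }
  rewrite level_B1. assert (H := INR_K_pos). assert (PI > 0) by apply PI_RGT_0. field. split; lra.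
Qed.

Lemma SAf_SA1 phi N : SAf phi N = SA1 phi N + phi z0.
Proof.
  unfold SAf, SA1. assert (E : B1 phi 0 = phi z0). { unfold B1, Bw. simpl words. rewrite lsum_cons, lsum_nil. simpl. ring. }
  assert (ES : forall N, sum_f_R0 (fun M => (-1) ^ M * B1 phi M) N =
     sum_f_R0 (fun M => if Nat.eqb M 0 then 0 else (-1) ^ M * B1 phi M) N + phi z0).
  { induction N0. cbn [sum_f_R0 Nat.eqb]. rewrite E. simpl. ring.
    rewrite tech5, tech5, IHN0. cbv beta. replace (Nat.eqb (S N0) 0) with false by reflexivity. ring. }
  rewrite ES. ring.
Qed.

Lemma star_SK N z : psi_s_star K c r z0 N z = - / (2 * PI) * (SK k0 N z + k0 (psub z z0)).
Proof. rewrite star_SAf, SAf_SA1. reflexivity. Qed.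

Lemma B1_minus phi psi M : B1 (fun x => phi x - psi x) M = B1 phi M - B1 psi M.
Proof. unfold B1, Bw. rewrite <- lsum_minus. apply lsum_ext_in. intros; ring. Qed.

Lemma SAf_minus phi psi N : SAf (fun x => phi x - psi x) N = SAf phi N - SAf psi N.
Proof.
  unfold SAf. rewrite B1_minus.
  rewrite (sum_eq _ (fun M => (-1) ^ M * B1 phi M - (-1) ^ M * B1 psi M)).
  2: { intros i _. rewrite B1_minus. ring. }
  rewrite minus_sum. ring.
Qed.

Definition chij (j : nat) (w : list nat) : R := if hne j w then 1 else 0.

Lemma chij_app j u k : u <> [] -> chij j (u ++ [k]) = chij j u.
Proof. intros H. destruct u. congruence. reflexivity. Qed.
Lemma chij_le1 j u : Rabs (chij j u) <= 1.
Proof. unfold chij. destruct (hne j u); rewrite ?Rabs_R1, ?Rabs_R0; lra. Qed.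

Lemma hne_far j w : (j < K)%nat -> valid K w -> hne j w = true -> r j < pdist (wp z0 w) (c j).
Proof.
  intros Hj Hv Hh. destruct w as [|h w'].
  - simpl. apply Hz0; auto.
  - simpl in Hh. apply Bool.negb_true_iff, Nat.eqb_neq in Hh.
    assert (Hi := level_inD (h :: w') Hv ltac:(discriminate)). simpl hd_or in Hi.
    destruct Hv as [HF _]. inversion HF; subst.
    unfold inD in Hi. assert (Hd := Hdisj j h Hj H1 Hh). assert (T1 := pdist_triang (c j) (wp z0 (h :: w')) (c h)).
    rewrite (pdist_sym (c j) (wp z0 (h :: w'))) in T1. assert (H4 := P_lt1). assert (H5 := P_pos).
    assert (H6 := Hr h H1). assert (r h * P < r h) by nra. lra.
Qed.

Definition Dk (z z' : pt) := fun zeta => k0 (psub z zeta) - k0 (psub z' zeta).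

Lemma pair_id j z z' zeta : (j < K)%nat -> pdist z (c j) = r j -> pdist z' (c j) = r j ->
  r j < pdist zeta (c j) -> Dk z z' (T j zeta) = Dk z z' zeta.
Proof.
  intros Hj Hz Hz' Hzeta. assert (Hrj := Hr j Hj).
  unfold Dk, kphi, k0. change (nrm (psub ?a ?b)) with (pdist a b).
  assert (Hpz : 0 < pdist z zeta). { assert (H := pdist_triang zeta z (c j)). rewrite (pdist_sym zeta z) in H. lra. }
  assert (Hpz' : 0 < pdist z' zeta). { assert (H := pdist_triang zeta z' (c j)). rewrite (pdist_sym zeta z') in H. lra. }
  unfold T. rewrite !inv_circle_pt; auto; try lra.
  unfold Rdiv. rewrite !ln_mult; try lra; try (apply Rinv_0_lt_compat; lra); try (apply Rmult_lt_0_compat; lra).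
Qed.

Lemma B1_pair j z z' M : (j < K)%nat -> pdist z (c j) = r j -> pdist z' (c j) = r j ->
  B1 (Dk z z') (S M) = Bw (chij j) (Dk z z') M + Bw (chij j) (Dk z z') (S M).
Proof.
  intros Hj Hz Hz'. unfold B1, Bw. rewrite !words_S_sum. rewrite <- lsum_plus. apply lsum_ext_in. intros w Hw.
  destruct (words_valid _ _ _ Hw) as [Hv _].
  rewrite (lsum_ext_in (seq 0 K) (fun i => if hne i w then 1 * Dk z z' (wp z0 (i :: w)) else 0)
    (fun i => (if Nat.eqb i j then (if hne i w then Dk z z' (wp z0 (i :: w)) else 0) else 0) +
       (if hne i w then chij j (i :: w) * Dk z z' (wp z0 (i :: w)) else 0))).
  2: { intros i _. unfold chij. destruct (Nat.eqb_spec i j) as [->|Hij].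
        change (hne j (j :: w)) with (negb (Nat.eqb j j)). rewrite Nat.eqb_refl. simpl. destruct (hne j w); ring.
        change (hne j (i :: w)) with (negb (Nat.eqb j i)).
        replace (Nat.eqb j i) with false by (symmetry; apply Nat.eqb_neq; auto). simpl. destruct (hne i w); ring. }
  rewrite lsum_plus, lsum_seq_single by auto. f_equal.
  unfold chij. destruct (hne j w) eqn:Hh. 2: ring. rewrite wp_cons. rewrite pair_id; auto. ring.
  apply hne_far; auto.
Qed.

Lemma SAf_Dk j z z' N : (j < K)%nat -> pdist z (c j) = r j -> pdist z' (c j) = r j ->
  SAf (Dk z z') N = (-1) ^ N / INR K * ((INR K - 1) * Bw (chij j) (Dk z z') N - Bw (chij j) (Dk z z') (S N)).
Proof.
  intros Hj Hz Hz'. set (Bc := Bw (chij j) (Dk z z')).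
  assert (E0 : B1 (Dk z z') 0%nat = Bc 0%nat). { unfold Bc, B1, Bw. simpl words. rewrite !lsum_cons, !lsum_nil. unfold chij. simpl hne. cbv iota. ring. }
  assert (ES : forall N, sum_f_R0 (fun M => (-1) ^ M * B1 (Dk z z') M) N = (-1) ^ N * Bc N).
  { induction N0. simpl sum_f_R0. rewrite E0. ring. rewrite tech5, IHN0. rewrite (B1_pair j z z' N0 Hj Hz Hz'). fold Bc. simpl pow. ring. }
  unfold SAf. rewrite ES, (B1_pair j z z' N Hj Hz Hz'). fold Bc. assert (H := INR_K_pos). simpl pow. field. lra.
Qed.


Lemma circle_Ext j z : (j < K)%nat -> pdist z (c j) = r j -> Ext z.
Proof.
  intros Hj Hz i Hi. destruct (Nat.eq_dec i j) as [->|Hij]. lra.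
  assert (Hd := Hdisj i j Hi Hj Hij). assert (T1 := pdist_triang (c i) z (c j)).
  rewrite (pdist_sym (c i) z) in T1. lra.
Qed.

Lemma SAf_Dk_bound j z z' : (j < K)%nat -> pdist z (c j) = r j -> pdist z' (c j) = r j ->
  exists C, forall n, Rabs (SAf (Dk z z') (S n)) <= C * qq ^ n.
Proof.
  intros Hj Hz Hz'. destruct (klip_Lip k0 k0_lip) as [L [HL HLip]].
  assert (E1 := circle_Ext j z Hj Hz). assert (E2 := circle_Ext j z' Hj Hz').
  assert (HD : Lip_in (Dk z z') (2 * L)).
  { intros h a b Hh Ha Hb. assert (A1 := HLip z E1 h a b Hh Ha Hb). assert (A2 := HLip z' E2 h a b Hh Ha Hb).
    unfold kphi in A1, A2. unfold Dk.
    replace (k0 (psub z a) - k0 (psub z' a) - (k0 (psub z b) - k0 (psub z' b))) with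
      ((k0 (psub z a) - k0 (psub z b)) - (k0 (psub z' a) - k0 (psub z' b))) by ring.
    eapply Rle_trans. apply Rabs_triang. rewrite Rabs_Ropp. lra. }
  exists ((INR K - 1) * (2 * L * (2 * Rs))). intros n.
  rewrite (SAf_Dk j z z' (S n) Hj Hz Hz'), Rabs_mult.
  assert (E : Rabs ((-1) ^ S n / INR K) = / INR K).
  { unfold Rdiv. rewrite Rabs_mult, pow_1_abs, Rabs_inv, Rabs_right. ring. left; apply INR_K_pos. }
  rewrite E.
  assert (H := cauchy_step (chij j) (Dk z z') (2 * L) n (chij_app j) (chij_le1 j) ltac:(lra) HD).
  assert (HK0 := INR_K_pos).
  apply Rmult_le_compat_l with (r := / INR K) in H. 2: left; apply Rinv_0_lt_compat; auto.
  eapply Rle_trans. apply H. unfold qq. rewrite pow_mult, Rpow_mult_distr.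
  right. field. lra.
Qed.

Lemma ubound_k0 : exists C G, ubound k0 G /\ (forall z, Ext z -> forall n, Rabs (SK k0 n z - G z) <= C * qq ^ n).
Proof. destruct (SK_unif k0 k0_lip) as [C [G H]]. exists C, G. split; auto. exists C; auto. Qed.

Lemma part_ii j : (j < K)%nat -> exists Cj : R,
     forall eps, eps > 0 -> exists N0, forall N z,
       (N >= N0)%nat -> pdist z (c j) = r j ->
       Rabs (psi_s_star K c r z0 N z - Cj) < eps.
Proof.
  intros Hj. destruct ubound_k0 as [C [G [_ HG]]].
  set (g := fun z => - / (2 * PI) * (G z + k0 (psub z z0))).
  assert (HPI : 0 < / (2 * PI)) by (apply Rinv_0_lt_compat; assert (PI > 0) by apply PI_RGT_0; lra).
  assert (Hsg : forall z, Ext z -> forall n, Rabs (psi_s_star K c r z0 n z - g z) <= / (2 * PI) * C * qq ^ n).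
  { intros z Hz n. rewrite star_SK. unfold g.
    replace (- / (2 * PI) * (SK k0 n z + k0 (psub z z0)) - - / (2 * PI) * (G z + k0 (psub z z0)))
      with (- / (2 * PI) * (SK k0 n z - G z)) by ring.
    rewrite Rabs_mult, Rabs_Ropp, Rabs_right by lra. rewrite Rmult_assoc. apply Rmult_le_compat_l. lra. auto. }
  set (zs := (fst (c j) + r j, snd (c j))).
  assert (Hzs : pdist zs (c j) = r j).
  { unfold pdist, nsq, psub, zs; simpl. replace (fst (c j) + r j - fst (c j)) with (r j) by ring.
    replace (snd (c j) - snd (c j)) with 0 by ring. rewrite Rmult_0_r, Rplus_0_r. apply sqrt_square. assert (X := Hr j Hj). lra. }
  exists (g zs).
  assert (Hconst : forall z, pdist z (c j) = r j -> g z = g zs).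
  { intros z Hz. destruct (SAf_Dk_bound j z zs Hj Hz Hzs) as [C' HC'].
    destruct (Req_dec (g z - g zs) 0) as [E|E]. lra. exfalso.
    set (e := Rabs (g z - g zs)). assert (He : 0 < e) by (apply Rabs_pos_lt; auto).
    destruct (geom_small (2 * (/ (2 * PI) * C) + / (2 * PI) * C') qq e qq_bounds He) as [N HN].
    specialize (HN N (le_n N)).
    assert (A1 := Hsg z (circle_Ext j z Hj Hz) (S N)). assert (A2 := Hsg zs (circle_Ext j zs Hj Hzs) (S N)).
    assert (A3 := HC' N).
    assert (Ed : psi_s_star K c r z0 (S N) z - psi_s_star K c r z0 (S N) zs = - / (2 * PI) * SAf (Dk z zs) (S N)).
    { rewrite !star_SAf. unfold Dk. change (fun zeta => k0 (psub z zeta) - k0 (psub zs zeta)) with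
        (fun zeta => kphi k0 z zeta - kphi k0 zs zeta). rewrite SAf_minus. ring. }
    assert (A4 : Rabs (psi_s_star K c r z0 (S N) z - psi_s_star K c r z0 (S N) zs) <= / (2 * PI) * C' * qq ^ N).
    { rewrite Ed, Rabs_mult, Rabs_Ropp, Rabs_right by lra. rewrite Rmult_assoc. apply Rmult_le_compat_l; lra. }
    assert (Hq := qq_bounds). assert (qq ^ S N <= qq ^ N).
    { simpl. assert (0 <= qq ^ N) by (apply pow_le; lra). nra. }
    assert (0 <= C). { assert (X := HG z (circle_Ext j z Hj Hz) 0%nat). simpl in X. assert (0 <= Rabs (SK k0 0 z - G z)) by apply Rabs_pos. lra. }
    assert (B : e <= Rabs (g z - psi_s_star K c r z0 (S N) z) + Rabs (psi_s_star K c r z0 (S N) z - psi_s_star K c r z0 (S N) zs)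
                   + Rabs (psi_s_star K c r z0 (S N) zs - g zs)).
    { unfold e. eapply Rle_trans. 2: apply Rplus_le_compat_r; apply Rabs_triang.
      eapply Rle_trans. 2: apply Rabs_triang. right. f_equal. ring. }
    rewrite Rabs_minus_sym in B.
    assert (/ (2 * PI) * C * qq ^ S N <= / (2 * PI) * C * qq ^ N). { apply Rmult_le_compat_l; auto. apply Rmult_le_pos; lra. }
    nra. }
  intros eps He. destruct (geom_small (/ (2 * PI) * C) qq eps qq_bounds He) as [N0 HN0]. exists N0.
  intros N z HN Hz. rewrite <- (Hconst z Hz). eapply Rle_lt_trans. apply Hsg. apply (circle_Ext j); auto. apply HN0. lia.
Qed.


Lemma ubound_ex k : KLip k -> exists G, ubound k G.
Proof. intros Hk. destruct (SK_unif k Hk) as [C [G H]]. exists G, C. auto. Qed.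

Lemma main_body :
  let h := fun N z => psi_s_star K c r z0 N z + / (2 * PI) * ln (pdist z z0) in
  ((forall N, harmonic_on (Dom K c r) (h N)) /\
   (forall S, compact2 S -> (forall z, S z -> Dom K c r z) -> unif_cv_on S h) /\
   exists psi : pt -> R,
     (forall z, Dom K c r z -> z <> z0 ->
        Un_cv (fun N => psi_s_star K c r z0 N z) (psi z)) /\
     harmonic_on (fun z => Dom K c r z /\ z <> z0) psi /\
     exists eps, eps > 0 /\ (forall z, pdist z z0 < eps -> Dom K c r z) /\
       exists H : pt -> R,
         harmonic_on (fun z => pdist z z0 < eps) H /\
         forall z, pdist z z0 < eps -> z <> z0 ->
           H z = psi z + / (2 * PI) * ln (pdist z z0)) /\
  (forall j, (j < K)%nat -> exists Cj : R,
     forall eps, eps > 0 -> exists N0, forall N z,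
       (N >= N0)%nat -> pdist z (c j) = r j ->
       Rabs (psi_s_star K c r z0 N z - Cj) < eps).
Proof.
  intros h.
  assert (Eh : forall N z, h N z = - / (2 * PI) * SK k0 N z).
  { intros N z. unfold h. rewrite star_SK. change (k0 (psub z z0)) with (ln (pdist z z0)). ring. }
  assert (HPI : 0 < / (2 * PI)) by (apply Rinv_0_lt_compat; assert (PI > 0) by apply PI_RGT_0; lra).
  destruct ubound_k0 as [C0 [G0 [U0 HG0]]].
  destruct (ubound_ex k1 k1_lip) as [G1 U1]. destruct (ubound_ex k2 k2_lip) as [G2 U2].
  destruct (ubound_ex k3 k3_lip) as [G3 U3]. destruct (ubound_ex k4 k4_lip) as [G4 U4].
  destruct (ubound_ex k5 k5_lip) as [G5 U5].
  assert (HGh : harmonic_on (Dom K c r) (fun z => - / (2 * PI) * G0 z)).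
  { apply (harmonic_G _ G0 G1 G2 G3 G4 G5); auto. }
  split; [split; [|split]|].
  - intros N. apply (harmonic_ext _ (fun z => - / (2 * PI) * SK k0 N z)). intros; rewrite Eh; auto. apply harmonic_hN.
  - intros S _ HS. exists (fun z => - / (2 * PI) * G0 z). intros eps He.
    destruct (geom_small (/ (2 * PI) * C0) qq eps qq_bounds He) as [N0 HN0]. exists N0.
    intros N z HN Hz. rewrite Eh. rewrite <- Rmult_minus_distr_l, Rabs_mult, Rabs_Ropp, (Rabs_right (/ (2 * PI))) by lra.
    eapply Rle_lt_trans. 2: apply (HN0 N HN). rewrite Rmult_assoc. apply Rmult_le_compat_l. lra.
    apply HG0. apply Dom_Ext; auto.
  - exists (fun z => - / (2 * PI) * (G0 z + k0 (psub z z0))). split; [|split].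
    + intros z Hz _ eps He. destruct (geom_small (/ (2 * PI) * C0) qq eps qq_bounds He) as [N0 HN0]. exists N0.
      intros n Hn. unfold R_dist. rewrite star_SK.
      replace (- / (2 * PI) * (SK k0 n z + k0 (psub z z0)) - - / (2 * PI) * (G0 z + k0 (psub z z0)))
        with (- / (2 * PI) * (SK k0 n z - G0 z)) by ring.
      rewrite Rabs_mult, Rabs_Ropp, (Rabs_right (/ (2 * PI))) by lra.
      eapply Rle_lt_trans. 2: apply (HN0 n Hn). rewrite Rmult_assoc. apply Rmult_le_compat_l. lra.
      apply HG0. apply Dom_Ext; auto.
    + apply (harmonic_ext _ (fun z => - / (2 * PI) * G0 z + - / (2 * PI) * k0 (psub z z0))). intros; ring.
      apply harmonic_plus. apply (harmonic_sub (Dom K c r)). intros z [A _]; auto. auto.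
      apply harmonic_scal. apply harmonic_k0. intros z [_ A]; auto.
    + destruct (Dom_ball z0 Hz0) as [d [Hd Hball]]. exists d. split. lra. split. auto.
      exists (fun z => - / (2 * PI) * G0 z). split.
      * apply (harmonic_sub (Dom K c r)); auto.
      * intros z _ _. change (ln (pdist z z0)) with (k0 (psub z z0)). ring.
  - apply part_ii.
Qed.

End Setup.

Theorem mainTheorem1 (K : nat) (c : nat -> pt) (r : nat -> R) (z0 : pt)
  (HK : (2 <= K)%nat)
  (Hr : forall j, (j < K)%nat -> r j > 0)
  (Hdisj : forall i j, (i < K)%nat -> (j < K)%nat -> i <> j ->
             pdist (c i) (c j) > r i + r j)
  (Hz0 : Dom K c r z0)
  (HP : (INR K - 1) * P_max K c r z0 ^ 2 < 1) :
  let h := fun N z => psi_s_star K c r z0 N z + / (2 * PI) * ln (pdist z z0) in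
  (* (i) *)
  ((forall N, harmonic_on (Dom K c r) (h N)) /\
   (forall S, compact2 S -> (forall z, S z -> Dom K c r z) -> unif_cv_on S h) /\
   exists psi : pt -> R,
     (forall z, Dom K c r z -> z <> z0 ->
        Un_cv (fun N => psi_s_star K c r z0 N z) (psi z)) /\
     harmonic_on (fun z => Dom K c r z /\ z <> z0) psi /\
     exists eps, eps > 0 /\ (forall z, pdist z z0 < eps -> Dom K c r z) /\
       exists H : pt -> R,
         harmonic_on (fun z => pdist z z0 < eps) H /\
         forall z, pdist z z0 < eps -> z <> z0 ->
           H z = psi z + / (2 * PI) * ln (pdist z z0)) /\
  (* (ii) *)
  (forall j, (j < K)%nat -> exists Cj : R,
     forall eps, eps > 0 -> exists N0, forall N z,
       (N >= N0)%nat -> pdist z (c j) = r j ->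
       Rabs (psi_s_star K c r z0 N z - Cj) < eps).
Proof. exact (main_body K c r z0 HK Hr Hdisj Hz0 HP). Qed.
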